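(* Let $(\mathcal E,B)$ be a product system (with unitaries $B_{s,t}:\mathcal E_{s+t}\to\mathcal E_s\otimes\mathcal E_t$) and let $F=(F_t)_{t>0}$ be an inclusion subsystem of $(\mathcal E,B)$. For $t>0$ set $$\tilde F_t=\overline{\mathrm{span}}\{x\otimes y: x\in\mathcal E_r\ominus F_r,\ y\in\mathcal E_{t-r}\ominus F_{t-r}\text{ for some }0<r<t\}\subset\mathcal E_t$$ (using $\mathcal E_t\cong\mathcal E_r\otimes\mathcal E_{t-r}$ via $B_{r,t-r}$) and $F'_t=\mathcal E_t\ominus\tilde F_t$. Then $(F'_t,B_{s,t}|_{F'_{s+t}})$ is an inclusion system, i.e. $B_{s,t}(F'_{s+t})\subset F'_s\otimes F'_t$ for all $s,t>0$.
   Context: A product system is a measurable family of separable Hilbert spaces $(\mathcal E_t)_{t>0}$ with unitaries $B_{s,t}:\mathcal E_{s+t}\to\mathcal E_s\otimes\mathcal E_t$ satisfying $(B_{r,s}\otimes 1)B_{r+s,t}=(1\otimes B_{s,t})B_{r,s+t}$. An inclusion system is a family of Hilbert spaces $E_t$ with isometries $\beta_{s,t}:E_{s+t}\to E_s\otimes E_t$ satisfying the same associativity relation. An inclusion subsystem of $(\mathcal E,B)$ is a family of closed subspaces $F_t\subset\mathcal E_t$ with $B_{s,t}(F_{s+t})\subset F_s\otimes F_t$ for all $s,t>0$. *)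

(* Defs.v *)
(* Hilbert spaces are modelled concretely
   as l^2(I) over a countable index type I, with values in C = R[i]
   (R = Stdlib reals, a realType via Rstruct). *)
From HB Require Import structures.
From mathcomp Require Import all_boot all_order all_algebra.
From mathcomp Require Import all_classical all_reals.
From mathcomp Require Import complex Rstruct.
Set Implicit Arguments.
Unset Strict Implicit.
Unset Printing Implicit Defensive.
Import Order.TTheory GRing.Theory Num.Theory.
Local Open Scope ring_scope.
Local Open Scope classical_set_scope.

Notation RR := Rdefinitions.R.
Notation CC := (RR[i]).

Section Hilbert.
Variable I : countType.

Definition sqn (z : CC) : RR := complex.Re z ^+ 2 + complex.Im z ^+ 2.

Definition psums (x : I -> CC) : set RR :=
  [set r | exists s : seq I, uniq s /\ r = \sum_(i <- s) sqn (x i)].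

Definition l2 : set (I -> CC) := [set x | has_ubound (psums x)].

Definition nrm2 (x : I -> CC) : RR := sup (psums x).

Definition vadd (x y : I -> CC) : I -> CC := fun i => x i + y i.
Definition vsub (x y : I -> CC) : I -> CC := fun i => x i - y i.
Definition vscale (c : CC) (x : I -> CC) : I -> CC := fun i => c * x i.
Definition vzero : I -> CC := fun _ => 0.

Definition rc (r : RR) : CC := complex.Complex r 0.

(* inner product <x,y> (linear in x) via the polarization identity *)
Definition ip (x y : I -> CC) : CC :=
  (rc (nrm2 (vadd x y)) - rc (nrm2 (vsub x y))
   + 'i * rc (nrm2 (vadd x (vscale 'i y)))
   - 'i * rc (nrm2 (vsub x (vscale 'i y)))) / 4%:R.

Definition closed_subspace (F : set (I -> CC)) : Prop :=
  [/\ F `<=` l2, F vzero,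
      (forall x y, F x -> F y -> F (vadd x y)),
      (forall c x, F x -> F (vscale c x)) &
      (forall x, l2 x ->
         (forall e : RR, 0 < e -> exists2 y, F y & nrm2 (vsub x y) < e) ->
         F x)].

Definition ocompl (F : set (I -> CC)) : set (I -> CC) :=
  [set x | l2 x /\ forall y, F y -> ip x y = 0].

Definition span (S : set (I -> CC)) : set (I -> CC) :=
  [set x | exists (n : nat) (c : 'I_n -> CC) (v : 'I_n -> I -> CC),
      (forall k, S (v k)) /\ x = (fun i => \sum_(k < n) c k * v k i)].

Definition cspan (S : set (I -> CC)) : set (I -> CC) :=
  [set x | l2 x /\
      forall e : RR, 0 < e -> exists2 y, span S y & nrm2 (vsub x y) < e].

End Hilbert.

Arguments l2 {I}.
Arguments nrm2 {I}.

(* l^2(I) (x) l^2(J) = l^2(I * J); elementary tensors *)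
Definition tv (I J : countType) (x : I -> CC) (y : J -> CC) : (I * J)%type -> CC :=
  fun p => x p.1 * y p.2.

Definition tsub (I J : countType) (F : set (I -> CC)) (G : set (J -> CC))
  : set ((I * J)%type -> CC) :=
  cspan [set z | exists x y, F x /\ G y /\ z = tv x y].

Definition unitary (I J : countType) (U : (I -> CC) -> (J -> CC)) : Prop :=
  [/\ (forall x, l2 x -> l2 (U x)),
      (forall x y, l2 x -> l2 y -> U (vadd x y) = vadd (U x) (U y)),
      (forall c x, l2 x -> U (vscale c x) = vscale c (U x)),
      (forall x, l2 x -> nrm2 (U x) = nrm2 x) &
      (forall y, l2 y -> exists2 x, l2 x & U x = y)].

(* U (x) 1 and 1 (x) U, acting slice-wise *)
Definition ampl_l (I J K : countType) (U : (I -> CC) -> (J -> CC))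
  (z : (I * K)%type -> CC) : (J * K)%type -> CC :=
  fun p => U (fun a => z (a, p.2)) p.1.

Definition ampl_r (I J K : countType) (U : (I -> CC) -> (J -> CC))
  (z : (K * I)%type -> CC) : (K * J)%type -> CC :=
  fun p => U (fun b => z (p.1, b)) p.2.

(* canonical identification (H1 (x) H2) (x) H3 = H1 (x) (H2 (x) H3) *)
Definition reassoc (I J K : countType) (z : ((I * J) * K)%type -> CC)
  : (I * (J * K))%type -> CC :=
  fun p => z ((p.1, p.2.1), p.2.2).

Definition castv (Ind : RR -> countType) (u v : RR) (e : u = v)
  (x : Ind u -> CC) : Ind v -> CC :=
  eq_rect u (fun w => Ind w -> CC) x v e.

(* Product system: E_t = l^2(Ind t) for t > 0, with unitaries
   B s t : E_(s+t) -> E_s (x) E_t satisfying associativity. *)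
Definition product_system (Ind : RR -> countType)
  (B : forall s t : RR, (Ind (s + t) -> CC) -> ((Ind s * Ind t)%type -> CC)) : Prop :=
  (forall s t : RR, 0 < s -> 0 < t -> unitary (B s t)) /\
  (forall r s t : RR, 0 < r -> 0 < s -> 0 < t ->
     forall x : Ind (r + s + t) -> CC, l2 x ->
       reassoc (ampl_l (B r s) (B (r + s) t x)) =
       ampl_r (B s t) (B r (s + t) (castv (esym (addrA r s t)) x))).

Definition inclusion_subsystem (Ind : RR -> countType)
  (B : forall s t : RR, (Ind (s + t) -> CC) -> ((Ind s * Ind t)%type -> CC))
  (F : forall t : RR, set (Ind t -> CC)) : Prop :=
  (forall t : RR, 0 < t -> closed_subspace (F t)) /\
  (forall s t : RR, 0 < s -> 0 < t ->
     forall x, F (s + t) x -> tsub (F s) (F t) (B s t x)).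

Lemma split_time (r t : RR) : t = r + (t - r).
Proof. by rewrite addrC subrK. Qed.

Definition Ftilde (Ind : RR -> countType)
  (B : forall s t : RR, (Ind (s + t) -> CC) -> ((Ind s * Ind t)%type -> CC))
  (F : forall t : RR, set (Ind t -> CC)) (t : RR) : set (Ind t -> CC) :=
  cspan [set z | l2 z /\ exists r : RR, [/\ 0 < r, r < t &
           exists x y, [/\ ocompl (F r) x, ocompl (F (t - r)) y &
              B r (t - r) (castv (split_time r t) z) = tv x y]]].

Arguments Ftilde {Ind} B F t.

Definition Fprime (Ind : RR -> countType)
  (B : forall s t : RR, (Ind (s + t) -> CC) -> ((Ind s * Ind t)%type -> CC))
  (F : forall t : RR, set (Ind t -> CC)) (t : RR) : set (Ind t -> CC) :=
  ocompl (Ftilde B F t).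

Arguments Fprime {Ind} B F t.

(* Main.v *)
Require Import Defs.
From HB Require Import structures.
From mathcomp Require Import all_boot all_order all_algebra.
From mathcomp Require Import all_classical all_reals.
From mathcomp Require Import complex Rstruct.
From mathcomp Require Import lra.
Import Order.TTheory GRing.Theory Num.Theory.
Local Open Scope ring_scope.
Local Open Scope classical_set_scope.
Set Implicit Arguments.
Unset Strict Implicit.
Unset Printing Implicit Defensive.
From mathcomp Require Import ring.

Lemma ReD (a b : CC) : complex.Re (a + b) = complex.Re a + complex.Re b.
Proof. by case: a; case: b. Qed.
Lemma ImD (a b : CC) : complex.Im (a + b) = complex.Im a + complex.Im b.
Proof. by case: a; case: b. Qed.
Lemma ReN (a : CC) : complex.Re (- a) = - complex.Re a.
Proof. by case: a. Qed.
Lemma ImN (a : CC) : complex.Im (- a) = - complex.Im a.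
Proof. by case: a. Qed.
Lemma ReM (a b : CC) : complex.Re (a * b) = complex.Re a * complex.Re b - complex.Im a * complex.Im b.
Proof. by case: a; case: b. Qed.
Lemma ImM (a b : CC) : complex.Im (a * b) = complex.Re a * complex.Im b + complex.Im a * complex.Re b.
Proof. by case: a; case: b. Qed.
Lemma Re_rc r : complex.Re (rc r) = r. Proof. by []. Qed.
Lemma Im_rc r : complex.Im (rc r) = 0. Proof. by []. Qed.
Lemma Re_i : complex.Re ('i : CC) = 0. Proof. by []. Qed.
Lemma Im_i : complex.Im ('i : CC) = 1. Proof. by []. Qed.
Lemma Re0 : complex.Re (0 : CC) = 0. Proof. by []. Qed.
Lemma Im0 : complex.Im (0 : CC) = 0. Proof. by []. Qed.
Lemma Re1 : complex.Re (1 : CC) = 1. Proof. by []. Qed.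
Lemma Im1 : complex.Im (1 : CC) = 0. Proof. by []. Qed.
Lemma Re_conj (a : CC) : complex.Re (conjc a) = complex.Re a. Proof. by case: a. Qed.
Lemma Im_conj (a : CC) : complex.Im (conjc a) = - complex.Im a. Proof. by case: a. Qed.
Lemma cext (a b : CC) : complex.Re a = complex.Re b -> complex.Im a = complex.Im b -> a = b.
Proof. by case: a; case: b => ? ? ? ? /= -> ->. Qed.
Lemma inv4 : (4%:R : CC)^-1 = rc (4%:R^-1).
Proof. have -> : rc (4%:R^-1) = ((4%:R^-1 : RR)%:C)%C by []. by rewrite fmorphV rmorph_nat. Qed.
Lemma Re_div4 (z : CC) : complex.Re (z / 4%:R) = complex.Re z / 4%:R.
Proof. by rewrite inv4 ReM Re_rc Im_rc mulr0 subr0. Qed.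
Lemma Im_div4 (z : CC) : complex.Im (z / 4%:R) = complex.Im z / 4%:R.
Proof. by rewrite inv4 ImM Re_rc Im_rc mulr0 add0r. Qed.
Lemma sqn_ge0 (z : CC) : 0 <= sqn z.
Proof. by rewrite /sqn addr_ge0 // sqr_ge0. Qed.

Ltac simpi := repeat match goal with
  | |- context [@complex.Im ?R (@Num.imaginary ?C)] => change (@complex.Im R (@Num.imaginary C)) with (1 : RR)
  | |- context [@complex.Re ?R (@Num.imaginary ?C)] => change (@complex.Re R (@Num.imaginary C)) with (0 : RR)
  | |- context [Rdefinitions.RbaseSymbolsImpl.R0] => change Rdefinitions.RbaseSymbolsImpl.R0 with (0 : RR)
  | |- context [Rdefinitions.RbaseSymbolsImpl.R1] => change Rdefinitions.RbaseSymbolsImpl.R1 with (1 : RR)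
  end.

Section Net.
Variable I : countType.

Definition netlim (f : seq I -> RR) (l : RR) :=
  forall e : RR, 0 < e -> exists s0 : seq I,
    forall s, uniq s -> {subset s0 <= s} -> `|f s - l| < e.

Lemma ext_uniq (s0 s1 : seq I) : exists s, [/\ uniq s, {subset s0 <= s} & {subset s1 <= s}].
Proof.
exists (undup (s0 ++ s1)); split; first exact: undup_uniq.
  by move=> x hx; rewrite mem_undup mem_cat hx.
by move=> x hx; rewrite mem_undup mem_cat hx orbT.
Qed.

Lemma netlim_uniq f g l m :
  netlim f l -> netlim g m ->
  (exists s1 : seq I, forall s, uniq s -> {subset s1 <= s} -> f s = g s) -> l = m.
Proof.
move=> hf hg [s1 hfg].
apply/eqP; rewrite -subr_eq0 -normr_eq0; apply/eqP.
apply/le_anti; rewrite normr_ge0 andbT.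
apply/ler_addgt0Pr => e he; rewrite add0r.
have he2 : 0 < e / 2 by rewrite divr_gt0.
case: (hf _ he2) => s0 h0; case: (hg _ he2) => s2 h2.
case: (ext_uniq s0 (s1 ++ s2)) => s [us h0s h12s].
have h1s : {subset s1 <= s} by move=> x hx; apply: h12s; rewrite mem_cat hx.
have h2s : {subset s2 <= s} by move=> x hx; apply: h12s; rewrite mem_cat hx orbT.
have := h0 s us h0s; have := h2 s us h2s; rewrite (hfg s us h1s).
move=> a b; have : `|l - m| <= `|g s - m| + `|g s - l|.
  by rewrite -[l - m](_ : (g s - m) - (g s - l) = _) ?ler_normB //; ring.
lra.
Qed.
End Net.

Section Net2.
Variable I : countType.
Implicit Types f g : seq I -> RR.

Lemma netlimD f g l m : netlim f l -> netlim g m -> netlim (fun s => f s + g s) (l + m).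
Proof.
move=> hf hg e he; have he2 : 0 < e / 2 by rewrite divr_gt0.
case: (hf _ he2) => s0 h0; case: (hg _ he2) => s1 h1.
case: (ext_uniq s0 s1) => s2 [_ h02 h12].
exists s2 => s us hs.
have := h0 s us (fun x hx => hs _ (h02 _ hx)); have := h1 s us (fun x hx => hs _ (h12 _ hx)).
move=> a b; have : `|f s + g s - (l + m)| <= `|f s - l| + `|g s - m|.
  by rewrite -[f s + g s - (l + m)](_ : (f s - l) + (g s - m) = _) ?ler_normD //; ring.
lra.
Qed.

Lemma netlimZ c f l : netlim f l -> netlim (fun s => c * f s) (c * l).
Proof.
move=> hf e he; have he2 : 0 < e / (`|c| + 1) by rewrite divr_gt0 // ltr_wpDl.
case: (hf _ he2) => s0 h0; exists s0 => s us hs.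
rewrite -mulrBr normrM.
have := h0 s us hs; have hc : 0 <= `|c| by [].
rewrite ltr_pdivlMr ?ltr_wpDl // => h.
have : `|f s - l| * `|c| <= `|f s - l| * (`|c| + 1) by rewrite ler_wpM2l // lerDl.
rewrite mulrC; lra.
Qed.

Lemma netlim_cst l : @netlim I (fun _ => l) l.
Proof. by move=> e he; exists [::] => s _ _; rewrite subrr normr0. Qed.

Lemma netlim_ext f g l : netlim f l ->
  (exists s1 : seq I, forall s, uniq s -> {subset s1 <= s} -> f s = g s) -> netlim g l.
Proof.
move=> hf [s1 h1] e he; case: (hf _ he) => s0 h0.
case: (ext_uniq s0 s1) => s2 [_ h02 h12]; exists s2 => s us hs.
rewrite -(h1 s us (fun x hx => hs _ (h12 _ hx))); exact: h0 s us (fun x hx => hs _ (h02 _ hx)).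
Qed.

Lemma netlim_extT f g l : netlim f l -> (forall s, uniq s -> f s = g s) -> netlim g l.
Proof. by move=> hf h; apply: (netlim_ext hf); exists [::] => s us _; apply: h. Qed.

Lemma netlim_le f g l m : netlim f l -> netlim g m ->
  (exists s1 : seq I, forall s, uniq s -> {subset s1 <= s} -> f s <= g s) -> l <= m.
Proof.
move=> hf hg [s1 hfg]; apply/ler_addgt0Pr => e he.
have he2 : 0 < e / 2 by rewrite divr_gt0.
case: (hf _ he2) => s0 h0; case: (hg _ he2) => s2 h2.
case: (ext_uniq s0 (s1 ++ s2)) => s [us h0s h12s].
have h1s : {subset s1 <= s} by move=> x hx; apply: h12s; rewrite mem_cat hx.
have h2s : {subset s2 <= s} by move=> x hx; apply: h12s; rewrite mem_cat hx orbT.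
have := h0 s us h0s; have := h2 s us h2s; have := hfg s us h1s.
rewrite !ltr_norml; lra.
Qed.

Lemma netlimN f l : netlim f l -> netlim (fun s => - f s) (- l).
Proof.
move=> h; have := netlimZ (-1) h; rewrite mulN1r => h'.
by apply: (netlim_extT h') => s _; rewrite mulN1r.
Qed.

Lemma netlimB f g l m : netlim f l -> netlim g m -> netlim (fun s => f s - g s) (l - m).
Proof. by move=> hf hg; apply: netlimD => //; apply: netlimN. Qed.

Lemma sum_mono (f : I -> RR) (s0 s : seq I) : (forall i, 0 <= f i) ->
  uniq s0 -> uniq s -> {subset s0 <= s} -> \sum_(i <- s0) f i <= \sum_(i <- s) f i.
Proof.
move=> f0 u0 us hs.
have hp : perm_eq [seq i <- s | mem s0 i] s0.
  apply: uniq_perm; first exact: filter_uniq.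
    by [].
  by move=> x; rewrite mem_filter; apply/andP/idP => [[]|h] //; split=> //; exact: hs.
by rewrite -(perm_big _ hp) big_filter [X in _ <= X](bigID (mem s0)) /= lerDl sumr_ge0.
Qed.
End Net2.

Section L2.
Variable I : countType.
Implicit Types x y : I -> CC.

Definition psum (s : seq I) x := \sum_(i <- s) sqn (x i).

Lemma psum_ge0 s x : 0 <= psum s x.
Proof. by rewrite /psum sumr_ge0 // => i _; apply: sqn_ge0. Qed.

Lemma psum1 i x : psum [:: i] x = sqn (x i).
Proof. by rewrite /psum big_seq1. Qed.

Lemma psums_psum x s : uniq s -> psums x (psum s x).
Proof. by move=> us; exists s. Qed.

Lemma psum_le_nrm2 x s : l2 x -> uniq s -> psum s x <= nrm2 x.
Proof. by move=> hx us; apply: (ub_le_sup hx); apply: psums_psum. Qed.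

Lemma nrm2_le x M : (forall s, uniq s -> psum s x <= M) -> nrm2 x <= M.
Proof.
move=> h; apply: ge_sup; first by exists (psum [::] x); apply: psums_psum.
by move=> r [s [us ->]]; apply: h.
Qed.

Lemma l2_bound x M : (forall s, uniq s -> psum s x <= M) -> l2 x.
Proof. by move=> h; exists M => r [s [us ->]]; apply: h. Qed.

Lemma nrm2_ge0 x : l2 x -> 0 <= nrm2 x.
Proof. by move=> hx; apply: le_trans (psum_le_nrm2 hx (s:=[::]) _); rewrite ?psum_ge0. Qed.

Lemma nrm2_adh x e : l2 x -> 0 < e -> exists2 s, uniq s & nrm2 x - e < psum s x.
Proof.
move=> hx he; have hs : has_sup (psums x).
  by split=> //; exists (psum [::] x); apply: psums_psum.
by case: (sup_adherent he hs) => r [s [us ->]] h; exists s.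
Qed.

Lemma nrm2_net x : l2 x -> netlim (fun s => psum s x) (nrm2 x).
Proof.
move=> hx e he; case: (nrm2_adh hx he) => s0 u0 h0; exists s0 => s us hs.
have h1 := psum_le_nrm2 hx us.
have h2 : psum s0 x <= psum s x by apply: sum_mono => // i; apply: sqn_ge0.
rewrite ler0_norm ?subr_le0 //; lra.
Qed.

Lemma sqnD_le (a b : CC) : sqn (a + b) <= 2 * sqn a + 2 * sqn b.
Proof.
rewrite /sqn ReD ImD; have := sqr_ge0 (complex.Re a - complex.Re b); have := sqr_ge0 (complex.Im a - complex.Im b); nra.
Qed.

Lemma sqnB_le (a b : CC) : sqn (a - b) <= 2 * sqn a + 2 * sqn b.
Proof.
rewrite /sqn ReD ImD ReN ImN; have := sqr_ge0 (complex.Re a + complex.Re b); have := sqr_ge0 (complex.Im a + complex.Im b); nra.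
Qed.

Lemma sqnM (a b : CC) : sqn (a * b) = sqn a * sqn b.
Proof. rewrite /sqn ReM ImM; ring. Qed.

Lemma psumD_le s x y : psum s (vadd x y) <= 2 * psum s x + 2 * psum s y.
Proof.
rewrite /psum !mulr_sumr -big_split /=; apply: ler_sum => i _; exact: sqnD_le.
Qed.

Lemma psumB_le s x y : psum s (vsub x y) <= 2 * psum s x + 2 * psum s y.
Proof.
rewrite /psum !mulr_sumr -big_split /=; apply: ler_sum => i _; exact: sqnB_le.
Qed.

Lemma psumZ s c x : psum s (vscale c x) = sqn c * psum s x.
Proof. by rewrite /psum mulr_sumr; apply: eq_bigr => i _; rewrite /vscale sqnM. Qed.

Lemma nrm2D_le x y : l2 x -> l2 y -> nrm2 (vadd x y) <= 2 * nrm2 x + 2 * nrm2 y.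
Proof.
move=> hx hy; apply: nrm2_le => s us; apply: le_trans (psumD_le s x y) _.
by apply: lerD; apply: ler_wpM2l => //; apply: psum_le_nrm2.
Qed.

Lemma nrm2B_le x y : l2 x -> l2 y -> nrm2 (vsub x y) <= 2 * nrm2 x + 2 * nrm2 y.
Proof.
move=> hx hy; apply: nrm2_le => s us; apply: le_trans (psumB_le s x y) _.
by apply: lerD; apply: ler_wpM2l => //; apply: psum_le_nrm2.
Qed.

Lemma l2_add x y : l2 x -> l2 y -> l2 (vadd x y).
Proof.
move=> hx hy; apply: (@l2_bound _ (2 * nrm2 x + 2 * nrm2 y)) => s us.
apply: le_trans (psumD_le s x y) _.
by apply: lerD; apply: ler_wpM2l => //; apply: psum_le_nrm2.
Qed.

Lemma l2_sub x y : l2 x -> l2 y -> l2 (vsub x y).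
Proof.
move=> hx hy; apply: (@l2_bound _ (2 * nrm2 x + 2 * nrm2 y)) => s us.
apply: le_trans (psumB_le s x y) _.
by apply: lerD; apply: ler_wpM2l => //; apply: psum_le_nrm2.
Qed.

Lemma l2_scale c x : l2 x -> l2 (vscale c x).
Proof.
move=> hx; apply: (@l2_bound _ (sqn c * nrm2 x)) => s us.
by rewrite psumZ ler_wpM2l ?sqn_ge0 // psum_le_nrm2.
Qed.

Lemma nrm2_scale c x : l2 x -> nrm2 (vscale c x) = sqn c * nrm2 x.
Proof.
move=> hx; apply: (netlim_uniq (nrm2_net (l2_scale c hx)) (netlimZ (sqn c) (nrm2_net hx))).
by exists [::] => s _ _; rewrite psumZ.
Qed.

Lemma l2_zero : l2 (@vzero I).
Proof. by apply: (@l2_bound _ 0) => s _; rewrite /psum big1 // => i _; rewrite /sqn /vzero /= expr0n /= addr0. Qed.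

Lemma sqn_eq0 (a : CC) : sqn a = 0 -> a = 0.
Proof.
case: a => a1 a2; rewrite /sqn /= => h.
have h1 := sqr_ge0 a1; have h2 := sqr_ge0 a2.
have e1 : a1 ^+ 2 = 0 by lra.
have e2 : a2 ^+ 2 = 0 by lra.
move/eqP: e1; rewrite sqrf_eq0 => /eqP ->.
by move/eqP: e2; rewrite sqrf_eq0 => /eqP ->.
Qed.

Lemma nrm2_eq0 x : l2 x -> nrm2 x <= 0 -> x = @vzero I.
Proof.
move=> hx h; apply: funext => i; apply: sqn_eq0; apply/le_anti; rewrite sqn_ge0 andbT.
by rewrite -(psum1 i); apply: le_trans h; apply: psum_le_nrm2.
Qed.

Lemma sqn_le_nrm2 x i : l2 x -> sqn (x i) <= nrm2 x.
Proof. by move=> hx; rewrite -psum1; apply: psum_le_nrm2. Qed.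
End L2.

Section IP.
Variable I : countType.
Implicit Types x y : I -> CC.

Definition ReT x y (i : I) := complex.Re (x i) * complex.Re (y i) + complex.Im (x i) * complex.Im (y i).
Definition ImT x y (i : I) := complex.Im (x i) * complex.Re (y i) - complex.Re (x i) * complex.Im (y i).

Lemma sum_lin (s : seq I) (F G H : I -> RR) a b :
  (forall i, H i = a * F i + b * G i) ->
  \sum_(i <- s) H i = a * \sum_(i <- s) F i + b * \sum_(i <- s) G i.
Proof. by move=> h; rewrite (eq_bigr _ (fun i _ => h i)) big_split /= -!mulr_sumr. Qed.

Lemma netlim_lin (f g : seq I -> RR) l m a b : netlim f l -> netlim g m ->
  netlim (fun s => a * f s + b * g s) (a * l + b * m).
Proof. by move=> hf hg; apply: netlimD; apply: netlimZ. Qed.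

Lemma ip_Re x y : complex.Re (ip x y) = (nrm2 (vadd x y) - nrm2 (vsub x y)) / 4%:R.
Proof. rewrite /ip Re_div4 !ReD !ReN !ReM !Re_rc !Im_rc; simpi; ring. Qed.

Lemma ip_Im x y : complex.Im (ip x y) =
  (nrm2 (vadd x (vscale 'i y)) - nrm2 (vsub x (vscale 'i y))) / 4%:R.
Proof. rewrite /ip Im_div4 !ImD !ImN !ImM !Re_rc !Im_rc; simpi; ring. Qed.

Lemma ipRe_net x y : l2 x -> l2 y ->
  netlim (fun s => \sum_(i <- s) ReT x y i) (complex.Re (ip x y)).
Proof.
move=> hx hy; rewrite ip_Re.
have h := netlim_lin (4%:R^-1) (- 4%:R^-1) (nrm2_net (l2_add hx hy)) (nrm2_net (l2_sub hx hy)).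
have -> : (nrm2 (vadd x y) - nrm2 (vsub x y)) / 4%:R =
  4%:R^-1 * nrm2 (vadd x y) + - 4%:R^-1 * nrm2 (vsub x y) by ring.
apply: (netlim_extT h) => s _; rewrite /psum.
symmetry; apply: sum_lin => i; rewrite /ReT /sqn /vadd /vsub !ReD !ImD !ReN !ImN; by field.
Qed.

Lemma ipIm_net x y : l2 x -> l2 y ->
  netlim (fun s => \sum_(i <- s) ImT x y i) (complex.Im (ip x y)).
Proof.
move=> hx hy; rewrite ip_Im.
have hiy := l2_scale 'i hy.
have h := netlim_lin (4%:R^-1) (- 4%:R^-1) (nrm2_net (l2_add hx hiy)) (nrm2_net (l2_sub hx hiy)).
have -> : (nrm2 (vadd x (vscale 'i y)) - nrm2 (vsub x (vscale 'i y))) / 4%:R =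
  4%:R^-1 * nrm2 (vadd x (vscale 'i y)) + - 4%:R^-1 * nrm2 (vsub x (vscale 'i y)) by ring.
apply: (netlim_extT h) => s _; rewrite /psum.
symmetry; apply: sum_lin => i; rewrite /ImT /sqn /vadd /vsub /vscale !ReD !ImD !ReN !ImN !ReM !ImM; simpi; by field.
Qed.
End IP.

Lemma netlim_eqT (I : countType) (f g : seq I -> RR) l m : netlim f l -> netlim g m -> (forall s, f s = g s) -> l = m.
Proof. by move=> hf hg h; apply: (netlim_uniq hf hg); exists [::] => s _ _. Qed.

Section IP2.
Variable I : countType.
Implicit Types x y : I -> CC.

Lemma ip_self x : l2 x -> ip x x = rc (nrm2 x).
Proof.
move=> hx; apply: cext; rewrite ?Re_rc ?Im_rc.
  apply: (netlim_eqT (ipRe_net hx hx) (nrm2_net hx)) => s.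
  by apply: eq_bigr => i _; rewrite /ReT /sqn !expr2.
apply: (netlim_eqT (ipIm_net hx hx) (@netlim_cst I 0)) => s.
by rewrite big1 // => i _; rewrite /ImT; ring.
Qed.

Lemma ipD2 x y y' : l2 x -> l2 y -> l2 y' -> ip x (vadd y y') = ip x y + ip x y'.
Proof.
move=> hx hy hy'; have hyy := l2_add hy hy'; apply: cext; rewrite ?ReD ?ImD.
  apply: (netlim_eqT (ipRe_net hx hyy) (netlimD (ipRe_net hx hy) (ipRe_net hx hy'))) => s.
  by rewrite -big_split /=; apply: eq_bigr => i _; rewrite /ReT /vadd ReD ImD; ring.
apply: (netlim_eqT (ipIm_net hx hyy) (netlimD (ipIm_net hx hy) (ipIm_net hx hy'))) => s.
by rewrite -big_split /=; apply: eq_bigr => i _; rewrite /ImT /vadd ReD ImD; ring.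
Qed.

Lemma ipD1 x x' y : l2 x -> l2 x' -> l2 y -> ip (vadd x x') y = ip x y + ip x' y.
Proof.
move=> hx hx' hy; have hxx := l2_add hx hx'; apply: cext; rewrite ?ReD ?ImD.
  apply: (netlim_eqT (ipRe_net hxx hy) (netlimD (ipRe_net hx hy) (ipRe_net hx' hy))) => s.
  by rewrite -big_split /=; apply: eq_bigr => i _; rewrite /ReT /vadd ReD ImD; ring.
apply: (netlim_eqT (ipIm_net hxx hy) (netlimD (ipIm_net hx hy) (ipIm_net hx' hy))) => s.
by rewrite -big_split /=; apply: eq_bigr => i _; rewrite /ImT /vadd ReD ImD; ring.
Qed.

Lemma ipZ2 x c y : l2 x -> l2 y -> ip x (vscale c y) = conjc c * ip x y.
Proof.
move=> hx hy; have hcy := l2_scale c hy; apply: cext.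
  rewrite [complex.Re (_ * ip x y)]ReM Re_conj Im_conj.
  have -> : complex.Re (ip x (vscale c y)) = complex.Re c * complex.Re (ip x y) + complex.Im c * complex.Im (ip x y).
    apply: (netlim_eqT (ipRe_net hx hcy) (netlim_lin _ _ (ipRe_net hx hy) (ipIm_net hx hy))) => s.
    by apply: sum_lin => i; rewrite /ReT /ImT /vscale ReM ImM; ring.
  ring.
rewrite [complex.Im (_ * ip x y)]ImM Re_conj Im_conj.
have -> : complex.Im (ip x (vscale c y)) = complex.Re c * complex.Im (ip x y) + (- complex.Im c) * complex.Re (ip x y).
  apply: (netlim_eqT (ipIm_net hx hcy) (netlim_lin _ _ (ipIm_net hx hy) (ipRe_net hx hy))) => s.
  by apply: sum_lin => i; rewrite /ReT /ImT /vscale ReM ImM; ring.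
ring.
Qed.

Lemma ipZ1 c x y : l2 x -> l2 y -> ip (vscale c x) y = c * ip x y.
Proof.
move=> hx hy; have hcx := l2_scale c hx; apply: cext.
  rewrite [complex.Re (_ * ip x y)]ReM.
  have -> : complex.Re (ip (vscale c x) y) = complex.Re c * complex.Re (ip x y) + (- complex.Im c) * complex.Im (ip x y).
    apply: (netlim_eqT (ipRe_net hcx hy) (netlim_lin _ _ (ipRe_net hx hy) (ipIm_net hx hy))) => s.
    by apply: sum_lin => i; rewrite /ReT /ImT /vscale ReM ImM; ring.
  ring.
rewrite [complex.Im (_ * ip x y)]ImM.
have -> : complex.Im (ip (vscale c x) y) = complex.Re c * complex.Im (ip x y) + complex.Im c * complex.Re (ip x y).
  apply: (netlim_eqT (ipIm_net hcx hy) (netlim_lin _ _ (ipIm_net hx hy) (ipRe_net hx hy))) => s.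
  by apply: sum_lin => i; rewrite /ReT /ImT /vscale ReM ImM; ring.
ring.
Qed.

Lemma ip_sym x y : l2 x -> l2 y -> ip y x = conjc (ip x y).
Proof.
move=> hx hy; apply: cext.
  rewrite Re_conj; apply: (netlim_eqT (ipRe_net hy hx) (ipRe_net hx hy)) => s.
  by apply: eq_bigr => i _; rewrite /ReT; ring.
rewrite Im_conj; apply: (netlim_eqT (ipIm_net hy hx) (netlimN (ipIm_net hx hy))) => s.
by rewrite -sumrN; apply: eq_bigr => i _; rewrite /ImT; ring.
Qed.

Lemma ip_sym0 x y : l2 x -> l2 y -> ip x y = 0 -> ip y x = 0.
Proof. by move=> hx hy h; rewrite ip_sym // h; apply: cext => /=; rewrite ?oppr0. Qed.

Lemma ReT_le x y i : ReT x y i <= (sqn (x i) + sqn (y i)) / 2.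
Proof.
rewrite /ReT /sqn.
have := sqr_ge0 (complex.Re (x i) - complex.Re (y i)); have := sqr_ge0 (complex.Im (x i) - complex.Im (y i)).
nra.
Qed.

Lemma ImT_le x y i : ImT x y i <= (sqn (x i) + sqn (y i)) / 2.
Proof.
rewrite /ImT /sqn.
have := sqr_ge0 (complex.Im (x i) - complex.Re (y i)); have := sqr_ge0 (complex.Re (x i) + complex.Im (y i)).
nra.
Qed.

Lemma ReT_ge x y i : - ReT x y i <= (sqn (x i) + sqn (y i)) / 2.
Proof.
rewrite /ReT /sqn.
have := sqr_ge0 (complex.Re (x i) + complex.Re (y i)); have := sqr_ge0 (complex.Im (x i) + complex.Im (y i)).
nra.
Qed.

Lemma ImT_ge x y i : - ImT x y i <= (sqn (x i) + sqn (y i)) / 2.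
Proof.
rewrite /ImT /sqn.
have := sqr_ge0 (complex.Im (x i) + complex.Re (y i)); have := sqr_ge0 (complex.Re (x i) - complex.Im (y i)).
nra.
Qed.

Lemma ip_bound x y : l2 x -> l2 y ->
  `|complex.Re (ip x y)| <= (nrm2 x + nrm2 y) / 2 /\ `|complex.Im (ip x y)| <= (nrm2 x + nrm2 y) / 2.
Proof.
move=> hx hy.
have hb := netlim_lin (2^-1) (2^-1) (nrm2_net hx) (nrm2_net hy).
have -> : (nrm2 x + nrm2 y) / 2 = 2^-1 * nrm2 x + 2^-1 * nrm2 y by ring.
have E : forall s, 2^-1 * psum s x + 2^-1 * psum s y = \sum_(i <- s) ((sqn (x i) + sqn (y i)) / 2).
  by move=> s; symmetry; apply: sum_lin => i; ring.
split; rewrite ler_norml; apply/andP; split.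
- rewrite lerNl; apply: (netlim_le (netlimN (ipRe_net hx hy)) hb); exists [::] => s _ _.
  by rewrite E -sumrN; apply: ler_sum => i _; apply: ReT_ge.
- apply: (netlim_le (ipRe_net hx hy) hb); exists [::] => s _ _.
  by rewrite E; apply: ler_sum => i _; apply: ReT_le.
- rewrite lerNl; apply: (netlim_le (netlimN (ipIm_net hx hy)) hb); exists [::] => s _ _.
  by rewrite E -sumrN; apply: ler_sum => i _; apply: ImT_ge.
- apply: (netlim_le (ipIm_net hx hy) hb); exists [::] => s _ _.
  by rewrite E; apply: ler_sum => i _; apply: ImT_le.
Qed.
End IP2.

Section Span.
Variable I : countType.
Implicit Types x y : I -> CC.
Variable S : set (I -> CC).

Lemma span_ind (P : set (I -> CC)) : P (@vzero I) ->
  (forall x y, P x -> P y -> P (vadd x y)) ->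
  (forall c x, P x -> P (vscale c x)) -> S `<=` P -> Defs.span S `<=` P.
Proof.
move=> P0 PD PZ SP x [n [c [v [hv ->]]]].
elim: n c v hv => [|n IH] c v hv.
  have -> : (fun i => \sum_(k < 0) c k * v k i) = @vzero I by apply: funext => i; rewrite big_ord0.
  exact: P0.
have -> : (fun i => \sum_(k < n.+1) c k * v k i) =
  vadd (fun i => \sum_(k < n) c (widen_ord (leqnSn n) k) * v (widen_ord (leqnSn n) k) i)
       (vscale (c ord_max) (v ord_max)).
  by apply: funext => i; rewrite big_ord_recr.
apply: PD; first by apply: IH => k; apply: hv.
by apply: PZ; apply: SP.
Qed.

Lemma span0 : Defs.span S (@vzero I).
Proof. by exists 0%N, (fun _ => 0), (fun _ => @vzero I); split=> [[]//|]; apply: funext => i; rewrite big_ord0. Qed.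

Lemma span_gen x : S x -> Defs.span S x.
Proof.
move=> hx; exists 1%N, (fun _ => 1), (fun _ => x); split=> // .
by apply: funext => i; rewrite big_ord1 mul1r.
Qed.

Lemma span_scale c x : Defs.span S x -> Defs.span S (vscale c x).
Proof.
move=> [n [d [v [hv ->]]]]; exists n, (fun k => c * d k), v; split=> //.
by apply: funext => i; rewrite /vscale mulr_sumr; apply: eq_bigr => k _; rewrite mulrA.
Qed.

Lemma span_add x y : Defs.span S x -> Defs.span S y -> Defs.span S (vadd x y).
Proof.
move=> [n [c [v [hv ->]]]] [m [d [u [hu ->]]]].
exists (n + m)%N, (fun k : 'I_(n + m) => match fintype.split k with inl a => c a | inr b => d b end),
  (fun k : 'I_(n + m) => match fintype.split k with inl a => v a | inr b => u b end); split.
  by move=> k; case: (fintype.split k).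
apply: funext => i; rewrite /vadd big_split_ord /=; congr (_ + _); apply: eq_bigr => k _.
  by rewrite (unsplitK (inl _ k)).
by rewrite (unsplitK (inr _ k)).
Qed.

Lemma span_sum (T : Type) (r : seq T) (f : T -> I -> CC) :
  (forall p, Defs.span S (f p)) -> Defs.span S (fun q => \sum_(p <- r) f p q).
Proof.
move=> h; elim: r => [|a r IH].
  have -> : (fun q => \sum_(p <- [::]) f p q) = @vzero I by apply: funext => q; rewrite big_nil.
  exact: span0.
have -> : (fun q => \sum_(p <- a :: r) f p q) = vadd (f a) (fun q => \sum_(p <- r) f p q).
  by apply: funext => q; rewrite big_cons.
exact: span_add.
Qed.

Lemma span_sub x y : Defs.span S x -> Defs.span S y -> Defs.span S (vsub x y).
Proof.
move=> hx hy; have -> : vsub x y = vadd x (vscale (-1) y).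
  by apply: funext => i; rewrite /vsub /vadd /vscale mulN1r.
by apply: span_add => //; apply: span_scale.
Qed.
End Span.

Lemma cext0 (a : CC) : complex.Re a = 0 -> complex.Im a = 0 -> a = 0.
Proof. by case: a => ? ? /= -> ->. Qed.

Lemma small0 (a : RR) : (forall d : RR, 0 < d -> `|a| <= d) -> a = 0.
Proof.
move=> h; apply/eqP; rewrite -normr_le0; apply/ler_addgt0Pr => d hd; rewrite add0r; exact: h.
Qed.

Lemma sqn_rc k : sqn (rc k) = k ^+ 2.
Proof. by rewrite /sqn Re_rc Im_rc expr0n addr0. Qed.

Lemma rcM a b : rc a * rc b = rc (a * b).
Proof. by apply: cext => /=; rewrite ?mulr0 ?mul0r ?subr0 ?addr0. Qed.

Lemma conj_rc a : conjc (rc a) = rc a.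
Proof. by apply: cext => /=; rewrite ?oppr0. Qed.

Section Ortho.
Variable I : countType.
Implicit Types x y u w : I -> CC.

Lemma vsubK x y : vadd (vsub x y) y = x.
Proof. by apply: funext => i; rewrite /vadd /vsub subrK. Qed.

Lemma nrm2_zero : nrm2 (@vzero I) = 0.
Proof.
have h2 := nrm2_ge0 (@l2_zero I).
suff h1 : nrm2 (@vzero I) <= 0 by lra.
apply: nrm2_le => s _.
by rewrite /psum big1 // => i _; rewrite /sqn /vzero /= expr0n /= addr0.
Qed.

Lemma ip_zero2 x : l2 x -> ip x (@vzero I) = 0.
Proof.
move=> hx; have hz := @l2_zero I; apply: cext.
  apply: (netlim_eqT (ipRe_net hx hz) (@netlim_cst I 0)) => s.
  by rewrite big1 // => i _; rewrite /ReT /vzero /= !mulr0 addr0.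
apply: (netlim_eqT (ipIm_net hx hz) (@netlim_cst I 0)) => s.
by rewrite big1 // => i _; rewrite /ImT /vzero /= !mulr0 subr0.
Qed.

Lemma span_l2 (S : set (I -> CC)) : S `<=` l2 -> Defs.span S `<=` l2.
Proof.
move=> hS; apply: span_ind => //; first exact: l2_zero.
  by move=> x y; apply: l2_add.
by move=> c x; apply: l2_scale.
Qed.

Lemma ortho_span (S : set (I -> CC)) u : l2 u -> S `<=` l2 ->
  (forall g, S g -> ip u g = 0) -> forall w, Defs.span S w -> ip u w = 0.
Proof.
move=> hu hS h w hw.
have : [set w | l2 w /\ ip u w = 0] w; last by case.
apply: (span_ind (S := S)) => //.
- by split; [exact: l2_zero | exact: ip_zero2].
- by move=> x y [hx ex] [hy ey]; split; [exact: l2_add | rewrite ipD2 // ex ey addr0].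
- by move=> c x [hx ex]; split; [exact: l2_scale | rewrite ipZ2 // ex mulr0].
- by move=> g hg; split; [exact: hS | exact: h].
Qed.

Lemma ip_bound_k u d (k : RR) : l2 u -> l2 d -> 0 < k ->
  `|complex.Re (ip u d)| <= (k ^+ 2 * nrm2 u + (k ^+ 2)^-1 * nrm2 d) / 2 /\
  `|complex.Im (ip u d)| <= (k ^+ 2 * nrm2 u + (k ^+ 2)^-1 * nrm2 d) / 2.
Proof.
move=> hu hd hk.
have E : ip u d = ip (vscale (rc k) u) (vscale (rc k^-1) d).
  rewrite ipZ1; last exact: l2_scale.
    by rewrite ipZ2 // conj_rc mulrA rcM mulfV ?gt_eqF // mul1r.
  by [].
rewrite E; have := ip_bound (l2_scale (rc k) hu) (l2_scale (rc k^-1) hd).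
by rewrite !nrm2_scale // !sqn_rc exprVn.
Qed.

Lemma ip_small u (delta : RR) : l2 u -> 0 < delta -> exists2 eta : RR, 0 < eta &
  forall d, l2 d -> nrm2 d < eta ->
  `|complex.Re (ip u d)| <= delta /\ `|complex.Im (ip u d)| <= delta.
Proof.
move=> hu hdel; set N := nrm2 u; have hN : 0 <= N by apply: nrm2_ge0.
set k := Num.min 1 (delta / (N + 1)).
have hq : 0 < delta / (N + 1) by rewrite divr_gt0 // ltr_wpDl.
have hk : 0 < k by rewrite lt_min ltr01 hq.
have hk1 : k <= 1 by rewrite ge_min lexx.
have hk2 : k <= delta / (N + 1) by rewrite ge_min lexx orbT.
have hkk : 0 < k ^+ 2 by rewrite exprn_gt0.
exists (delta * k ^+ 2); first by rewrite mulr_gt0.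
move=> d hd hnd.
have [b1 b2] := ip_bound_k hu hd hk.
have h1 : k ^+ 2 * N <= delta.
  have : k ^+ 2 <= k by rewrite expr2 ger_pMl.
  have : k * (N + 1) <= delta by rewrite -ler_pdivlMr // ltr_wpDl.
  move=> a b; have : k ^+ 2 * N <= k * N by rewrite ler_wpM2r.
  nra.
have h2 : (k ^+ 2)^-1 * nrm2 d < delta.
  by rewrite mulrC ltr_pdivrMr.
have h3 : (k ^+ 2 * N + (k ^+ 2)^-1 * nrm2 d) / 2 <= delta by lra.
by split; apply: le_trans h3.
Qed.

Lemma ortho_cspan (S : set (I -> CC)) u : l2 u -> S `<=` l2 ->
  (forall g, S g -> ip u g = 0) -> forall w, cspan S w -> ip u w = 0.
Proof.
move=> hu hS h w [hw happ].
have key : forall delta : RR, 0 < delta ->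
   `|complex.Re (ip u w)| <= delta /\ `|complex.Im (ip u w)| <= delta.
  move=> delta hdel; case: (ip_small hu hdel) => eta heta hsm.
  case: (happ _ heta) => y hy hny.
  have hyl := span_l2 hS hy.
  have -> : ip u w = ip u (vsub w y).
    by rewrite -{1}(vsubK w y) (ipD2 hu (l2_sub hw hyl) hyl) (ortho_span hu hS h hy) addr0.
  by apply: hsm => //; apply: l2_sub.
apply: cext0.
  by apply: small0 => d hd; case: (key d hd).
by apply: small0 => d hd; case: (key d hd).
Qed.

Lemma span_cspan (S : set (I -> CC)) x : S `<=` l2 -> Defs.span S x -> cspan S x.
Proof.
move=> hS hx; split; first by apply: (span_l2 hS).
move=> e he; exists x => //.
have -> : vsub x x = @vzero I by apply: funext => i; rewrite /vsub subrr.
by rewrite nrm2_zero.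
Qed.

Lemma cspan_closed (S : set (I -> CC)) : S `<=` l2 -> closed_subspace (cspan S).
Proof.
move=> hS; split.
- by move=> x [].
- by apply: span_cspan => //; apply: span0.
- move=> x y [hx ax] [hy ay]; split; first exact: l2_add.
  move=> e he; have he4 : 0 < e / 4 by rewrite divr_gt0.
  case: (ax _ he4) => x' hx' nx; case: (ay _ he4) => y' hy' ny.
  exists (vadd x' y'); first exact: span_add.
  have -> : vsub (vadd x y) (vadd x' y') = vadd (vsub x x') (vsub y y').
    by apply: funext => i; rewrite /vsub /vadd; ring.
  have hxl := span_l2 hS hx'; have hyl := span_l2 hS hy'.
  apply: le_lt_trans (nrm2D_le (l2_sub hx hxl) (l2_sub hy hyl)) _; lra.
- move=> c x [hx ax]; split; first exact: l2_scale.
  move=> e he; have he' : 0 < e / (sqn c + 1) by rewrite divr_gt0 // ltr_wpDl // sqn_ge0.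
  case: (ax _ he') => x' hx' nx; exists (vscale c x'); first exact: span_scale.
  have hxl := span_l2 hS hx'.
  have -> : vsub (vscale c x) (vscale c x') = vscale c (vsub x x').
    by apply: funext => i; rewrite /vsub /vscale mulrBr.
  rewrite (nrm2_scale c (l2_sub hx hxl)).
  have h0 := sqn_ge0 c; have h1 := nrm2_ge0 (l2_sub hx hxl).
  move: nx; rewrite ltr_pdivlMr ?ltr_wpDl // => nx; nra.
- move=> x hx ax; split => // e he; have he4 : 0 < e / 4 by rewrite divr_gt0.
  case: (ax _ he4) => y [hy ay] nxy; case: (ay _ he4) => y' hy' nyy.
  exists y' => //; have hyl := span_l2 hS hy'.
  have -> : vsub x y' = vadd (vsub x y) (vsub y y').
    by apply: funext => i; rewrite /vsub /vadd; ring.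
  apply: le_lt_trans (nrm2D_le (l2_sub hx hy) (l2_sub hy hyl)) _; lra.
Qed.
End Ortho.

Section Tensor.
Variables I J : countType.

Definition pairs (s1 : seq I) (s2 : seq J) := [seq (i, j) | i <- s1, j <- s2].

Lemma pairs_uniq s1 s2 : uniq s1 -> uniq s2 -> uniq (pairs s1 s2).
Proof. by move=> u1 u2; apply: allpairs_uniq => // -[a b] [c d] _ _ /= ->. Qed.

Lemma sum_pairs (f : I -> RR) (g : J -> RR) s1 s2 :
  \sum_(p <- pairs s1 s2) f p.1 * g p.2 = (\sum_(i <- s1) f i) * (\sum_(j <- s2) g j).
Proof.
rewrite /pairs big_allpairs_dep /= mulr_suml; apply: eq_bigr => i _.
by rewrite mulr_sumr.
Qed.

Lemma pairs_sub (S : seq (I * J)) :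
  {subset S <= pairs (undup (map fst S)) (undup (map snd S))}.
Proof.
move=> [a b] h; apply/allpairsP; exists (a, b); split => //=; rewrite mem_undup.
  by apply/mapP; exists (a, b).
by apply/mapP; exists (a, b).
Qed.

Lemma pairs_ext (s0 : seq (I * J)) s1 s2 :
  {subset map fst s0 <= s1} -> {subset map snd s0 <= s2} -> {subset s0 <= pairs s1 s2}.
Proof.
move=> h1 h2 [a b] h; apply/allpairsP; exists (a, b); split => //=.
  by apply: h1; apply/mapP; exists (a, b).
by apply: h2; apply/mapP; exists (a, b).
Qed.

Lemma tv_bound (a : I -> CC) (b : J -> CC) s : uniq s -> l2 a -> l2 b ->
  psum s (tv a b) <= nrm2 a * nrm2 b.
Proof.
move=> us ha hb.
set s1 := undup (map fst s); set s2 := undup (map snd s).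
have u1 : uniq s1 by apply: undup_uniq.
have u2 : uniq s2 by apply: undup_uniq.
apply: (@le_trans _ _ (\sum_(p <- pairs s1 s2) sqn (a p.1) * sqn (b p.2))).
  have -> : psum s (tv a b) = \sum_(p <- s) sqn (a p.1) * sqn (b p.2).
    by apply: eq_bigr => p _; rewrite /tv sqnM.
  apply: (@sum_mono _ (fun p => sqn (a p.1) * sqn (b p.2))) => //.
  - by move=> p; rewrite mulr_ge0 // sqn_ge0.
  - exact: pairs_uniq.
  - exact: pairs_sub.
rewrite (sum_pairs (fun i => sqn (a i)) (fun j => sqn (b j))).
apply: ler_pM; [exact: psum_ge0 | exact: psum_ge0 | exact: psum_le_nrm2 | exact: psum_le_nrm2].
Qed.

Lemma l2_tv (a : I -> CC) (b : J -> CC) : l2 a -> l2 b -> l2 (tv a b).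
Proof. by move=> ha hb; apply: (@l2_bound _ _ (nrm2 a * nrm2 b)) => s us; apply: tv_bound. Qed.

Lemma nrm2_tv_le (a : I -> CC) (b : J -> CC) : l2 a -> l2 b -> nrm2 (tv a b) <= nrm2 a * nrm2 b.
Proof. by move=> ha hb; apply: nrm2_le => s us; apply: tv_bound. Qed.
End Tensor.

Lemma netlim_prod (I J : countType) (F1 : seq I -> RR) (F2 : seq J -> RR) l1 l2 :
  netlim F1 l1 -> netlim F2 l2 -> forall e : RR, 0 < e ->
  exists (s10 : seq I) (s20 : seq J), forall s1 s2, uniq s1 -> uniq s2 -> {subset s10 <= s1} -> {subset s20 <= s2} ->
  `|F1 s1 * F2 s2 - l1 * l2| < e.
Proof.
move=> h1 h2 e he.
have hq : 0 < e / (`|l1| + `|l2| + 1) by rewrite divr_gt0 // ltr_wpDl // addr_ge0.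
set d := Num.min 1 (e / (`|l1| + `|l2| + 1)).
have hd : 0 < d by rewrite lt_min ltr01 hq.
have hd1 : d <= 1 by rewrite ge_min lexx.
have hd2 : d * (`|l1| + `|l2| + 1) <= e.
  by rewrite -ler_pdivlMr ?ltr_wpDl ?addr_ge0 // ge_min lexx orbT.
case: (h1 _ hd) => s10 k1; case: (h2 _ hd) => s20 k2.
exists s10, s20 => s1 s2 u1 u2 i1 i2.
have a1 := k1 s1 u1 i1; have a2 := k2 s2 u2 i2.
set a := F1 s1 - l1 in a1; set b := F2 s2 - l2 in a2.
have -> : F1 s1 * F2 s2 - l1 * l2 = a * b + a * l2 + l1 * b by rewrite /a /b; ring.
have hn : `|a * b + a * l2 + l1 * b| <= `|a| * `|b| + `|a| * `|l2| + `|l1| * `|b|.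
  by rewrite -!normrM; apply: le_trans (ler_normD _ _) _; rewrite lerD2r ler_normD.
apply: le_lt_trans hn _.
have n1 := normr_ge0 a; have n2 := normr_ge0 b; have n3 := normr_ge0 l1; have n4 := normr_ge0 l2.
have hab : `|a| * `|b| <= `|a| by rewrite ler_piMr // (le_trans (ltW a2)).
have h3 : `|a| * `|l2| <= d * `|l2| by rewrite ler_wpM2r // ltW.
have h4 : `|l1| * `|b| <= `|l1| * d by rewrite ler_wpM2l // ltW.
lra.
Qed.

Lemma netlim_pairs (I J : countType) (h : seq (I * J) -> RR) L
  (F1 G1 : seq I -> RR) (F2 G2 : seq J -> RR) l1 l2 m1 m2 :
  netlim h L -> netlim F1 l1 -> netlim F2 l2 -> netlim G1 m1 -> netlim G2 m2 ->
  (forall s1 s2, uniq s1 -> uniq s2 -> h (pairs s1 s2) = F1 s1 * F2 s2 + G1 s1 * G2 s2) ->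
  L = l1 * l2 + m1 * m2.
Proof.
move=> hh hF1 hF2 hG1 hG2 hp.
suff : L - (l1 * l2 + m1 * m2) = 0 by move/eqP; rewrite subr_eq0 => /eqP.
apply: small0 => d hd; have he : 0 < d / 3 by rewrite divr_gt0.
case: (hh _ he) => s0 k0.
case: (netlim_prod hF1 hF2 he) => a1 [a2 kF].
case: (netlim_prod hG1 hG2 he) => b1 [b2 kG].
set s1 := undup (a1 ++ b1 ++ map fst s0); set s2 := undup (a2 ++ b2 ++ map snd s0).
have u1 : uniq s1 by apply: undup_uniq.
have u2 : uniq s2 by apply: undup_uniq.
have sub1 : forall x, x \in a1 ++ b1 ++ map fst s0 -> x \in s1 by move=> x; rewrite mem_undup.
have sub2 : forall x, x \in a2 ++ b2 ++ map snd s0 -> x \in s2 by move=> x; rewrite mem_undup.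
have hS : {subset s0 <= pairs s1 s2}.
  apply: pairs_ext => x hx; [apply: sub1 | apply: sub2]; rewrite !mem_cat hx !orbT //.
have e0 := k0 _ (pairs_uniq u1 u2) hS.
have i1 : {subset a1 <= s1} by move=> x hx; apply: sub1; rewrite mem_cat hx.
have i2 : {subset a2 <= s2} by move=> x hx; apply: sub2; rewrite mem_cat hx.
have j1 : {subset b1 <= s1} by move=> x hx; apply: sub1; rewrite !mem_cat hx orbT.
have j2 : {subset b2 <= s2} by move=> x hx; apply: sub2; rewrite !mem_cat hx orbT.
have eF := kF s1 s2 u1 u2 i1 i2.
have eG := kG s1 s2 u1 u2 j1 j2.
rewrite hp // in e0.
have -> : L - (l1 * l2 + m1 * m2) = - (F1 s1 * F2 s2 + G1 s1 * G2 s2 - L) + (F1 s1 * F2 s2 - l1 * l2) + (G1 s1 * G2 s2 - m1 * m2) by ring.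
apply: le_trans (ler_normD _ _) _; apply: le_trans (lerD (ler_normD _ _) (lexx _)) _.
rewrite normrN; lra.
Qed.

Section IPTV.
Variables I J : countType.

Lemma ip_tv (a c : I -> CC) (b d : J -> CC) : l2 a -> l2 b -> l2 c -> l2 d ->
  ip (tv a b) (tv c d) = ip a c * ip b d.
Proof.
move=> ha hb hc hd; have hab := l2_tv ha hb; have hcd := l2_tv hc hd.
apply: cext.
  rewrite [complex.Re (ip a c * _)]ReM.
  have -> : complex.Re (ip a c) * complex.Re (ip b d) - complex.Im (ip a c) * complex.Im (ip b d) =
    complex.Re (ip a c) * complex.Re (ip b d) + (- complex.Im (ip a c)) * complex.Im (ip b d) by ring.
  apply: (netlim_pairs (ipRe_net hab hcd) (ipRe_net ha hc) (ipRe_net hb hd) (netlimN (ipIm_net ha hc)) (ipIm_net hb hd)).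
  move=> s1 s2 u1 u2.
  rewrite -sumrN -(sum_pairs (fun i => ReT a c i) (fun j => ReT b d j)) -(sum_pairs (fun i => - ImT a c i) (fun j => ImT b d j)).
  rewrite -big_split /=; apply: eq_bigr => -[i j] _ /=.
  rewrite /ReT /ImT /tv !ReM !ImM; ring.
rewrite [complex.Im (ip a c * _)]ImM.
apply: (netlim_pairs (ipIm_net hab hcd) (ipRe_net ha hc) (ipIm_net hb hd) (ipIm_net ha hc) (ipRe_net hb hd)).
move=> s1 s2 u1 u2.
rewrite -(sum_pairs (fun i => ReT a c i) (fun j => ImT b d j)) -(sum_pairs (fun i => ImT a c i) (fun j => ReT b d j)).
rewrite -big_split /=; apply: eq_bigr => -[i j] _ /=.
rewrite /ReT /ImT /tv !ReM !ImM; ring.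
Qed.

Lemma ip_tv0l (a c : I -> CC) (b d : J -> CC) : l2 a -> l2 b -> l2 c -> l2 d ->
  ip a c = 0 -> ip (tv a b) (tv c d) = 0.
Proof. by move=> ha hb hc hd h; rewrite ip_tv // h mul0r. Qed.

Lemma ip_tv0r (a c : I -> CC) (b d : J -> CC) : l2 a -> l2 b -> l2 c -> l2 d ->
  ip b d = 0 -> ip (tv a b) (tv c d) = 0.
Proof. by move=> ha hb hc hd h; rewrite ip_tv // h mulr0. Qed.
End IPTV.

Lemma real_cauchy (a : nat -> RR) :
  (forall e : RR, 0 < e -> exists N, forall n m, (N <= n)%N -> (N <= m)%N -> `|a n - a m| < e) ->
  exists L, forall e : RR, 0 < e -> exists N, forall n, (N <= n)%N -> `|a n - L| < e.
Proof.
move=> hc; set E := [set x : RR | exists N, forall n, (N <= n)%N -> x <= a n].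
case: (hc 1 ltr01) => N1 h1.
have hE : E (a N1 - 1).
  exists N1 => n hn; have := h1 n N1 hn (leqnn _); rewrite ltr_norml; lra.
have hub : forall N, (forall n m, (N <= n)%N -> (N <= m)%N -> `|a n - a m| < 1) -> ubound E (a N + 1).
  move=> N hN x [N' hN']; have := hN' (maxn N N') (leq_maxr _ _).
  have := hN (maxn N N') N (leq_maxl _ _) (leqnn _); rewrite ltr_norml; lra.
have hsup : has_ubound E by exists (a N1 + 1); apply: hub.
exists (sup E) => e he; have he2 : 0 < e / 2 by rewrite divr_gt0.
case: (hc _ he2) => N hN; exists N => n hn.
have l1 : a N - e / 2 <= sup E.
  apply: ub_le_sup => //; exists N => k hk; have := hN k N hk (leqnn _); rewrite ltr_norml; lra.
have l2 : sup E <= a N + e / 2.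
  apply: ge_sup; first by exists (a N1 - 1).
  move=> x [N' hN']; have := hN' (maxn N N') (leq_maxr _ _).
  have := hN (maxn N N') N (leq_maxl _ _) (leqnn _); rewrite ltr_norml; lra.
have := hN n N hn (leqnn _); rewrite !ltr_norml; lra.
Qed.

Lemma fin_max (T : eqType) (Q : T -> nat -> Prop) :
  (forall i, exists M, forall n, (M <= n)%N -> Q i n) ->
  forall s : seq T, exists M, forall i, i \in s -> forall n, (M <= n)%N -> Q i n.
Proof.
move=> h; elim => [|a s [M hM]]; first by exists 0%N.
case: (h a) => Ma hMa; exists (maxn Ma M) => i; rewrite inE => /orP [/eqP -> | hi] n hn.
  by apply: hMa; apply: leq_trans hn; apply: leq_maxl.
by apply: hM => //; apply: leq_trans hn; apply: leq_maxr.
Qed.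

Lemma sqn_small (z : CC) (e : RR) : 0 < e -> sqn z < e ^+ 2 ->
  `|complex.Re z| < e /\ `|complex.Im z| < e.
Proof.
rewrite /sqn => he h; have h1 := sqr_ge0 (complex.Re z); have h2 := sqr_ge0 (complex.Im z).
by split; rewrite ltr_norml; apply/andP; split; nra.
Qed.

Lemma sum_const_le (I : eqType) (s : seq I) (f : I -> RR) (d : RR) :
  (forall i, i \in s -> f i <= d) -> \sum_(i <- s) f i <= (size s)%:R * d.
Proof.
elim: s => [|a s IH] h; first by rewrite big_nil mul0r.
rewrite big_cons /= -add1n natrD mulrDl mul1r; apply: lerD.
  by apply: h; rewrite inE eqxx.
by apply: IH => i hi; apply: h; rewrite inE hi orbT.
Qed.

Section Complete.
Variable I : countType.

Lemma l2_complete (y : nat -> I -> CC) : (forall n, l2 (y n)) ->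
  (forall e : RR, 0 < e -> exists N, forall n m, (N <= n)%N -> (N <= m)%N -> nrm2 (vsub (y n) (y m)) < e) ->
  exists2 p, l2 p & forall e : RR, 0 < e -> exists N, forall n, (N <= n)%N -> nrm2 (vsub p (y n)) < e.
Proof.
move=> hl hc.
have hcoord : forall i e, 0 < e -> exists N, forall n m, (N <= n)%N -> (N <= m)%N ->
    `|complex.Re (y n i - y m i)| < e /\ `|complex.Im (y n i - y m i)| < e.
  move=> i e he; have he2 : 0 < e ^+ 2 by rewrite exprn_gt0.
  case: (hc _ he2) => N hN; exists N => n m hn hm; apply: sqn_small => //.
  apply: le_lt_trans (hN n m hn hm); exact: (sqn_le_nrm2 i (l2_sub (hl n) (hl m))).
have /choice [Lr hLr] : forall i : I, exists L, forall e : RR, 0 < e -> exists N, forall n, (N <= n)%N ->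
    `|complex.Re (y n i) - L| < e.
  move=> i; apply: real_cauchy => e he; case: (hcoord i e he) => N hN; exists N => n m hn hm.
  by case: (hN n m hn hm); rewrite ReD ReN.
have /choice [Li hLi] : forall i : I, exists L, forall e : RR, 0 < e -> exists N, forall n, (N <= n)%N ->
    `|complex.Im (y n i) - L| < e.
  move=> i; apply: real_cauchy => e he; case: (hcoord i e he) => N hN; exists N => n m hn hm.
  by case: (hN n m hn hm); rewrite ImD ImN.
pose p : I -> CC := fun i => Complex (Lr i) (Li i).
have hpt : forall i (d : RR), 0 < d -> exists M, forall n, (M <= n)%N -> sqn (p i - y n i) <= d.
  move=> i d hd; set e' := Num.min 1 (d / 2).
  have he' : 0 < e' by rewrite lt_min ltr01 divr_gt0.
  have he1 : e' <= 1 by rewrite ge_min lexx.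
  have he2 : e' <= d / 2 by rewrite ge_min lexx orbT.
  case: (hLr i _ he') => M1 h1; case: (hLi i _ he') => M2 h2.
  exists (maxn M1 M2) => n hn.
  have a1 := h1 n (leq_trans (leq_maxl _ _) hn); have a2 := h2 n (leq_trans (leq_maxr _ _) hn).
  rewrite /sqn ReD ImD ReN ImN /=.
  move: a1 a2; rewrite !ltr_norml => /andP [a1 b1] /andP [a2 b2]; nra.
have key : forall e : RR, 0 < e -> exists N, forall n, (N <= n)%N -> forall s, uniq s ->
    psum s (vsub p (y n)) <= e / 2.
  move=> e he; have he8 : 0 < e / 8 by rewrite divr_gt0.
  case: (hc _ he8) => N hN; exists N => n hn s us.
  set d := e / 8 / ((size s)%:R + 1).
  have hd : 0 < d by rewrite divr_gt0 // ltr_wpDl.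
  case: (fin_max (fun i => hpt i d hd) s) => M hM.
  set m := maxn N M.
  have hsd : psum s (vsub p (y m)) <= e / 8.
    apply: le_trans (sum_const_le (d := d) _) _.
      by move=> i hi; apply: hM => //; apply: leq_maxr.
    have hz : 0 <= (size s)%:R :> RR by [].
    rewrite /d mulrA ler_pdivrMr ?ltr_wpDl //; nra.
  have hcm : psum s (vsub (y m) (y n)) < e / 8.
    apply: le_lt_trans (hN m n (leq_maxl _ _) hn).
    by apply: psum_le_nrm2 => //; apply: l2_sub.
  have : psum s (vsub p (y n)) <= 2 * psum s (vsub p (y m)) + 2 * psum s (vsub (y m) (y n)).
    have -> : vsub p (y n) = vadd (vsub p (y m)) (vsub (y m) (y n)).
      by apply: funext => i; rewrite /vadd /vsub; ring.
    exact: psumD_le.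
  lra.
have l2p : l2 p.
  case: (key 1 ltr01) => N hN.
  have h1 : l2 (vsub p (y N)) by apply: (@l2_bound _ _ (1 / 2)) => s us; apply: hN.
  have -> : p = vadd (vsub p (y N)) (y N) by rewrite vsubK.
  exact: l2_add.
exists p => // e he; case: (key e he) => N hN; exists N => n hn.
apply: le_lt_trans (nrm2_le (hN n hn)) _; lra.
Qed.
End Complete.

Lemma sqn2 : sqn (2%:R : CC) = 4%:R.
Proof. rewrite /sqn /=; simpi; ring. Qed.

Lemma inv_mono (k n : nat) : (k <= n)%N -> n.+1%:R^-1 <= k.+1%:R^-1 :> RR.
Proof. by move=> h; rewrite lef_pV2 ?posrE ?ltr0Sn // ler_nat ltnS. Qed.

Lemma sqn_w (a b : CC) (l m : RR) : 0 < l -> l * m = 1 ->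
  sqn (a + b) <= (1 + l) * sqn a + (1 + m) * sqn b.
Proof.
move=> hl hlm; have hm : 0 < m.
  by have := hlm; rewrite -(divff (lt0r_neq0 hl)) => /mulrI -> //; [rewrite invr_gt0 | rewrite unitfE lt0r_neq0].
rewrite /sqn ReD ImD.
set a1 := complex.Re a; set a2 := complex.Im a; set b1 := complex.Re b; set b2 := complex.Im b.
have k1 : 0 <= m * (l * a1 - b1) ^+ 2 by apply: mulr_ge0; [exact: ltW | exact: sqr_ge0].
have k2 : 0 <= m * (l * a2 - b2) ^+ 2 by apply: mulr_ge0; [exact: ltW | exact: sqr_ge0].
have e1 : m * (l * a1 - b1) ^+ 2 = (l * m) * (l * a1 ^+ 2) - 2 * (l * m) * (a1 * b1) + m * b1 ^+ 2 by ring.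
have e2 : m * (l * a2 - b2) ^+ 2 = (l * m) * (l * a2 ^+ 2) - 2 * (l * m) * (a2 * b2) + m * b2 ^+ 2 by ring.
rewrite hlm !mul1r in e1 e2.
have E : (1 + l) * (a1 ^+ 2 + a2 ^+ 2) + (1 + m) * (b1 ^+ 2 + b2 ^+ 2) - ((a1 + b1) ^+ 2 + (a2 + b2) ^+ 2)
  = (l * a1 ^+ 2 - 2 * (a1 * b1) + m * b1 ^+ 2) + (l * a2 ^+ 2 - 2 * (a2 * b2) + m * b2 ^+ 2) by ring.
lra.
Qed.

Section Proj.
Variable I : countType.
Implicit Types x y z w a b : I -> CC.

Lemma parallelogram a b : l2 a -> l2 b ->
  nrm2 (vadd a b) + nrm2 (vsub a b) = 2 * nrm2 a + 2 * nrm2 b.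
Proof.
move=> ha hb.
apply: (netlim_eqT (netlimD (nrm2_net (l2_add ha hb)) (nrm2_net (l2_sub ha hb))) (netlim_lin 2 2 (nrm2_net ha) (nrm2_net hb))) => s.
rewrite /psum -big_split /=; apply: sum_lin => i.
by rewrite /sqn /vadd /vsub !ReD !ImD !ReN !ImN; ring.
Qed.

Lemma nrm2_sym a b : l2 a -> l2 b -> nrm2 (vsub a b) = nrm2 (vsub b a).
Proof.
move=> ha hb; apply: (netlim_eqT (nrm2_net (l2_sub ha hb)) (nrm2_net (l2_sub hb ha))) => s.
by apply: eq_bigr => i _; rewrite /sqn /vsub !ReD !ImD !ReN !ImN; ring.
Qed.

Lemma nrm2_w a b (l m : RR) : l2 a -> l2 b -> 0 < l -> l * m = 1 ->
  nrm2 (vadd a b) <= (1 + l) * nrm2 a + (1 + m) * nrm2 b.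
Proof.
move=> ha hb hl hlm; have hm : 0 <= m.
  have : 0 < l * m by rewrite hlm.
  by rewrite pmulr_rgt0 // => /ltW.
apply: nrm2_le => s us.
apply: (@le_trans _ _ ((1 + l) * psum s a + (1 + m) * psum s b)).
  rewrite /psum -(@sum_lin _ s (fun i => sqn (a i)) (fun i => sqn (b i)) (fun i => (1 + l) * sqn (a i) + (1 + m) * sqn (b i)) (1 + l) (1 + m)) //.
  by apply: ler_sum => i _; apply: sqn_w.
have h1 : 0 <= 1 + l by rewrite addr_ge0 // ltW.
have h2 : 0 <= 1 + m by rewrite addr_ge0.
by apply: lerD; apply: ler_wpM2l => //; apply: psum_le_nrm2.
Qed.

Lemma nrm2_expand w z c : l2 w -> l2 z ->
  nrm2 (vsub w (vscale c z)) = nrm2 w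
    - 2 * (complex.Re c * complex.Re (ip w z) + complex.Im c * complex.Im (ip w z))
    + sqn c * nrm2 z.
Proof.
move=> hw hz; have hcz := l2_scale c hz.
have h := netlimD (netlimD (nrm2_net hw) (netlimZ (-2) (netlim_lin (complex.Re c) (complex.Im c) (ipRe_net hw hz) (ipIm_net hw hz)))) (netlimZ (sqn c) (nrm2_net hz)).
rewrite -mulNr; apply: (netlim_eqT (nrm2_net (l2_sub hw hcz)) h) => s.
rewrite -(@sum_lin _ s (ReT w z) (ImT w z) (fun i => complex.Re c * ReT w z i + complex.Im c * ImT w z i) (complex.Re c) (complex.Im c)) //.
rewrite /psum !mulr_sumr -!big_split /=; apply: eq_bigr => i _.
rewrite /sqn /ReT /ImT /vsub /vscale ReD ImD ReN ImN ReM ImM; ring.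
Qed.
End Proj.

Section Proj2.
Variable I : countType.

Lemma proj_thm (S : set (I -> CC)) x : closed_subspace S -> l2 x ->
  exists2 q, S q & ocompl S (vsub x q).
Proof.
case=> hSl hS0 hSD hSZ hScl hx.
set A := [set r : RR | exists2 y, S y & r = nrm2 (vsub x y)].
have hA0 : A (nrm2 (vsub x (@vzero I))) by exists (@vzero I).
have hlb : lbound A 0.
  by move=> r [y hy ->]; apply: nrm2_ge0; apply: l2_sub => //; apply: hSl.
have hAlb : has_lbound A by exists 0.
have hinf : has_inf A by split; [exists (nrm2 (vsub x (@vzero I))) | ].
pose D : RR := inf A.
have hD : forall y, S y -> D <= nrm2 (vsub x y) :> RR.
  by move=> y hy; apply: (ge_inf hAlb); exists y.
have hD0 : 0 <= D :> RR by apply: lb_le_inf => //; exists (nrm2 (vsub x (@vzero I))).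
have /choice [y hy] : forall n : nat, exists y, S y /\ nrm2 (vsub x y) < D + n.+1%:R^-1.
  move=> n; have hn : 0 < n.+1%:R^-1 :> RR by rewrite invr_gt0 ltr0Sn.
  by case: (inf_adherent hn hinf) => r [y' Sy' ->] hr; exists y'.
have yS n : S (y n) by case: (hy n).
have yl n : l2 (y n) by apply: hSl.
have yD n : nrm2 (vsub x (y n)) < D + n.+1%:R^-1 by case: (hy n).
have hpar : forall n m, nrm2 (vsub (y n) (y m)) <= 2 * n.+1%:R^-1 + 2 * m.+1%:R^-1.
  move=> n m.
  set a := vsub x (y m); set b := vsub x (y n).
  have ha : l2 a by apply: l2_sub.
  have hb : l2 b by apply: l2_sub.
  set mid := vscale (2%:R^-1) (vadd (y n) (y m)).
  have hmid : S mid by apply: hSZ; apply: hSD.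
  have e1 : vsub a b = vsub (y n) (y m) by apply: funext => i; rewrite /a /b /vsub; ring.
  have e2 : vadd a b = vscale 2%:R (vsub x mid).
    by apply: funext => i; rewrite /a /b /mid /vadd /vsub /vscale; by field.
  have := parallelogram ha hb; rewrite e1 e2 (nrm2_scale _ (l2_sub hx (hSl _ hmid))) sqn2.
  have := hD mid hmid; have := yD n; have := yD m; rewrite -/a -/b.
  move: (nrm2 a) (nrm2 b) (nrm2 (vsub x mid)) (nrm2 (vsub (y n) (y m))) (n.+1%:R^-1 : RR) (m.+1%:R^-1 : RR) => A1 B1 M1 P1 u v.
  lra.
have hcauchy : forall e : RR, 0 < e -> exists N, forall n m, (N <= n)%N -> (N <= m)%N ->
    nrm2 (vsub (y n) (y m)) < e.
  move=> e he; have he4 : 0 < e / 4 by rewrite divr_gt0.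
  case: (ltr_add_invr he4) => k; rewrite add0r => hk.
  exists k => n m hn hm; apply: le_lt_trans (hpar n m) _.
  have := inv_mono hn; have := inv_mono hm.
  move: hk; move: (n.+1%:R^-1 : RR) (m.+1%:R^-1 : RR) (k.+1%:R^-1 : RR) => u v w; lra.
case: (l2_complete yl hcauchy) => q hq hconv.
have Sq : S q.
  apply: hScl => // e he; case: (hconv e he) => N hN; exists (y N) => //; exact: hN.
exists q => //.
set w := vsub x q; have hw : l2 w by apply: l2_sub.
have hxq : nrm2 w <= D.
  apply/ler_addgt0Pr => eta heta.
  set l := eta / (2 * (D + 1)); set m := l^-1.
  have hl : 0 < l by rewrite divr_gt0 // mulr_gt0 // ltr_wpDl.
  have hlm : l * m = 1 by rewrite /m mulfV // gt_eqF.
  have hm : 0 < m by rewrite invr_gt0.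
  have hlD : l * D <= eta / 2.
    have : l * (D + 1) = eta / 2 by rewrite /l; field; rewrite gt_eqF // ltr_wpDl.
    have : 0 <= l by apply: ltW.
    nra.
  have he1 : 0 < eta / (4 * (1 + m)) by rewrite divr_gt0 // mulr_gt0 // ltr_wpDl // ltW.
  case: (hconv _ he1) => N1 hN1.
  have he2 : 0 < eta / (4 * (1 + l)) by rewrite divr_gt0 // mulr_gt0 // ltr_wpDl // ltW.
  case: (ltr_add_invr he2) => k; rewrite add0r => hk.
  set n := maxn N1 k.
  have c1 : nrm2 (vsub (y n) q) < eta / (4 * (1 + m)).
    by rewrite nrm2_sym //; apply: hN1; apply: leq_maxl.
  have c2 : nrm2 (vsub x (y n)) < D + eta / (4 * (1 + l)).
    have := inv_mono (leq_maxr N1 k); have := yD n; rewrite -/n.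
    move: hk; move: (n.+1%:R^-1 : RR) (k.+1%:R^-1 : RR) => u v; lra.
  have ew : w = vadd (vsub x (y n)) (vsub (y n) q) by apply: funext => i; rewrite /w /vadd /vsub; ring.
  have hw2 := nrm2_w (l2_sub hx (yl n)) (l2_sub (yl n) hq) hl hlm; rewrite -ew in hw2.
  have f1 : (1 + l) * nrm2 (vsub x (y n)) <= (1 + l) * (D + eta / (4 * (1 + l))).
    by rewrite ler_wpM2l ?addr_ge0 ?ltW.
  have f2 : (1 + m) * nrm2 (vsub (y n) q) <= (1 + m) * (eta / (4 * (1 + m))).
    by rewrite ler_wpM2l ?addr_ge0 ?ltW.
  have f3 : (1 + l) * (D + eta / (4 * (1 + l))) = D + l * D + eta / 4.
    by field; rewrite gt_eqF // ltr_wpDl // ltW.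
  have f4 : (1 + m) * (eta / (4 * (1 + m))) = eta / 4.
    by field; rewrite gt_eqF // ltr_wpDl // ltW.
  lra.
split => // z hz; have hzl : l2 z by apply: hSl.
set a1 := complex.Re (ip w z); set a2 := complex.Im (ip w z).
set Z := nrm2 z; have hZ : 0 <= Z by apply: nrm2_ge0.
set t := (Z + 1)^-1.
have ht : 0 < t by rewrite invr_gt0 ltr_wpDl.
have htZ : t * (Z + 1) = 1 by rewrite /t mulVf // gt_eqF // ltr_wpDl.
set c : CC := Complex (t * a1) (t * a2).
have hq' : S (vadd q (vscale c z)) by apply: hSD => //; apply: hSZ.
have := hD _ hq'.
have -> : vsub x (vadd q (vscale c z)) = vsub w (vscale c z).
  by apply: funext => i; rewrite /w /vsub /vadd; ring.
rewrite nrm2_expand // /sqn /= -/a1 -/a2 -/Z => hexp.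
set N := a1 ^+ 2 + a2 ^+ 2.
have hN0 : 0 <= N by rewrite addr_ge0 // sqr_ge0.
have e1 : (t * a1) ^+ 2 + (t * a2) ^+ 2 = t ^+ 2 * N by rewrite /N; ring.
have e2 : t * a1 * a1 + t * a2 * a2 = t * N by rewrite /N; ring.
rewrite e1 e2 in hexp.
have k : 2 * (t * N) <= t ^+ 2 * N * Z by lra.
have tZ1 : t * Z <= 1.
  have h' : t * Z + t = 1 by rewrite -htZ; ring.
  lra.
have p1 : t ^+ 2 * N * Z <= t * N.
  have -> : t ^+ 2 * N * Z = (t * N) * (t * Z) by ring.
  by rewrite ler_piMr // mulr_ge0 // ltW.
have hN : N <= 0.
  have : t * N <= 0 by lra.
  by rewrite pmulr_rle0.
have z1 : a1 ^+ 2 = 0 by have := sqr_ge0 a1; have := sqr_ge0 a2; rewrite /N in hN; lra.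
have z2 : a2 ^+ 2 = 0 by have := sqr_ge0 a1; have := sqr_ge0 a2; rewrite /N in hN; lra.
move/eqP: z1; rewrite sqrf_eq0 => /eqP z1.
move/eqP: z2; rewrite sqrf_eq0 => /eqP z2.
by apply: cext0.
Qed.
End Proj2.

Lemma sum_delta (T : eqType) (V : pzRingType) (s : seq T) (f : T -> V) q : uniq s ->
  \sum_(p <- s) f p * (q == p)%:R = (q \in s)%:R * f q.
Proof.
elim: s => [|a s IH] /=; first by rewrite big_nil mul0r.
case/andP => ha us; rewrite big_cons IH // inE.
case: (eqVneq q a) => [->|hqa] /=.
  by rewrite (negPf ha) mulr1 mul0r addr0 mul1r.
by rewrite mulr0 add0r.
Qed.

Section Tensor2.
Variables I J : countType.

Definition ev (i : I) : I -> CC := fun k => ((k == i)%:R : CC).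

Lemma sqn_nat (b : bool) : sqn (b%:R : CC) = b%:R.
Proof. by case: b; rewrite /sqn /=; simpi; rewrite ?expr0n ?expr1n /= ?addr0. Qed.

Lemma l2_ev i : l2 (ev i).
Proof.
apply: (@l2_bound _ _ 1) => s us; rewrite /psum.
have -> : \sum_(k <- s) sqn (ev i k) = \sum_(k <- s) 1 * (i == k)%:R.
  by apply: eq_bigr => k _; rewrite /ev sqn_nat mul1r eq_sym.
by rewrite sum_delta // mulr1; case: (i \in s).
Qed.
End Tensor2.

Lemma tv_ev (I J : countType) (p q : I * J) : tv (ev p.1) (ev p.2) q = (q == p)%:R.
Proof.
case: p q => [a b] [c d]; rewrite /tv /ev /= xpair_eqE.
by case: (c == a); case: (d == b); rewrite ?mulr1 ?mul1r ?mulr0 ?mul0r.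
Qed.

Lemma sqn0 : sqn (0 : CC) = 0.
Proof. by rewrite /sqn /=; simpi; rewrite expr0n addr0. Qed.

Section TMain.
Variables I J : countType.

Definition G2 (S : set (I -> CC)) (T : set (J -> CC)) : set ((I * J) -> CC) :=
  [set g | (exists a y, [/\ S a, l2 y & g = tv a y]) \/ (exists y h, [/\ l2 y, T h & g = tv y h])].

Lemma tensor_main (S : set (I -> CC)) (T : set (J -> CC)) (z : (I * J) -> CC) :
  closed_subspace S -> closed_subspace T -> l2 z ->
  (forall g y, S g -> l2 y -> ip z (tv g y) = 0) ->
  (forall h y, T h -> l2 y -> ip z (tv y h) = 0) ->
  tsub (ocompl S) (ocompl T) z.
Proof.
move=> hS hT hz HL HR.
have hSl : S `<=` l2 by case: hS.
have hTl : T `<=` l2 by case: hT.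
have /choice [QS hQS] : forall i : I, exists q, S q /\ ocompl S (vsub (ev i) q).
  by move=> i; case: (proj_thm hS (l2_ev i)) => q h1 h2; exists q.
have /choice [QT hQT] : forall j : J, exists q, T q /\ ocompl T (vsub (ev j) q).
  by move=> j; case: (proj_thm hT (l2_ev j)) => q h1 h2; exists q.
pose PS := fun i => vsub (ev i) (QS i).
pose PT := fun j => vsub (ev j) (QT j).
have QSS i : S (QS i) by case: (hQS i).
have QTT j : T (QT j) by case: (hQT j).
have PSo i : ocompl S (PS i) by case: (hQS i).
have PTo j : ocompl T (PT j) by case: (hQT j).
have QSl i : l2 (QS i) by apply: hSl.
have QTl j : l2 (QT j) by apply: hTl.
have PSl i : l2 (PS i) by case: (PSo i).
have PTl j : l2 (PT j) by case: (PTo j).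
pose Gw := [set g | exists x y, ocompl S x /\ ocompl T y /\ g = tv x y].
have Gwl : Gw `<=` l2 by move=> g [a [b [[ha _] [[hb _] ->]]]]; apply: l2_tv.
pose G := G2 S T.
have Gl : G `<=` l2.
  by move=> g [[a [y [ha hy ->]]]|[y [h [hy hh ->]]]]; apply: l2_tv => //; [apply: hSl | apply: hTl].
split => // e he.
have he7 : 0 < e / 7 by rewrite divr_gt0.
case: (nrm2_adh hz he7) => s0 us0 hs0.
pose zN := fun q => \sum_(p <- s0) z p * tv (ev p.1) (ev p.2) q.
pose wN := fun q => \sum_(p <- s0) z p * tv (PS p.1) (PT p.2) q.
have wNspan : Defs.span Gw wN.
  apply: span_sum => p.
  have -> : (fun q => z p * tv (PS p.1) (PT p.2) q) = vscale (z p) (tv (PS p.1) (PT p.2)) by [].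
  by apply: span_scale; apply: span_gen; exists (PS p.1), (PT p.2).
pose v := vsub zN wN.
have vspan : Defs.span G v.
  have -> : v = fun q => \sum_(p <- s0) (z p * tv (QS p.1) (ev p.2) q + z p * tv (PS p.1) (QT p.2) q).
    apply: funext => q; rewrite /v /vsub /zN /wN -sumrB; apply: eq_bigr => p _.
    by rewrite /tv /PS /PT /vsub; ring.
  apply: span_sum => p.
  have -> : (fun q => z p * tv (QS p.1) (ev p.2) q + z p * tv (PS p.1) (QT p.2) q) =
    vadd (vscale (z p) (tv (QS p.1) (ev p.2))) (vscale (z p) (tv (PS p.1) (QT p.2))) by [].
  apply: span_add; apply: span_scale; apply: span_gen.
    by left; exists (QS p.1), (ev p.2); split => //; apply: l2_ev.
  by right; exists (PS p.1), (QT p.2); split.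
have zv : ip z v = 0.
  apply: (ortho_span hz Gl _ vspan) => g [[a [y [ha hy ->]]]|[y [h [hy hh ->]]]].
    exact: HL.
  exact: HR.
have wNl : l2 wN by apply: (span_l2 Gwl).
have vl : l2 v by apply: (span_l2 Gl).
have wv : ip wN v = 0.
  apply: (ortho_span wNl Gl _ vspan) => g hg.
  apply: ip_sym0 => //; first exact: Gl.
  apply: (ortho_span (Gl _ hg) Gwl _ wNspan) => f [a [b [ha [hb ->]]]].
  have al : l2 a by case: ha.
  have bl : l2 b by case: hb.
  case: hg => [[c [y [hc hy ->]]]|[y [h [hy hh ->]]]].
    apply: ip_tv0l => //; first exact: hSl.
    by apply: ip_sym0 => //; [exact: hSl | case: ha => _; apply].
  apply: ip_tv0r => //; first exact: hTl.
  by apply: ip_sym0 => //; [exact: hTl | case: hb => _; apply].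
have zNl : l2 zN.
  have -> : zN = vadd v wN by apply: funext => q; rewrite /v /vadd /vsub subrK.
  exact: l2_add.
pose d := vsub z zN.
have dl : l2 d by apply: l2_sub.
have hzN : forall q, zN q = (q \in s0)%:R * z q.
  move=> q; rewrite /zN.
  have -> : \sum_(p <- s0) z p * tv (ev p.1) (ev p.2) q = \sum_(p <- s0) z p * (q == p)%:R.
    by apply: eq_bigr => p _; rewrite tv_ev.
  exact: sum_delta.
have hd : nrm2 d < e / 7.
  have hle : nrm2 d <= nrm2 z - psum s0 z.
    apply: nrm2_le => s us.
    pose s1 := [seq k <- s | k \notin s0].
    have us' : uniq (s1 ++ s0).
      rewrite cat_uniq filter_uniq //= us0 andbT; apply/hasPn => k hk.
      by rewrite mem_filter hk.
    have := psum_le_nrm2 hz us'.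
    have -> : psum (s1 ++ s0) z = psum s1 z + psum s0 z by rewrite /psum big_cat.
    have -> : psum s d = psum s1 z.
      rewrite /psum /s1 big_filter (bigID (fun k => k \in s0)) /= big1 ?add0r.
        by apply: eq_bigr => k hk; rewrite /d /vsub hzN (negPf hk) mul0r subr0.
      by move=> k hk; rewrite /d /vsub hzN hk mul1r subrr sqn0.
    lra.
  lra.
exists wN => //.
have E1 : vsub z wN = vadd d v by apply: funext => q; rewrite /d /v /vsub /vadd; ring.
have E2 : ip (vadd d v) v = 0.
  rewrite -E1.
  have -> : vsub z wN = vadd z (vscale (-1) wN) by apply: funext => q; rewrite /vsub /vadd /vscale mulN1r.
  by rewrite (ipD1 hz (l2_scale (-1) wNl) vl) (ipZ1 (-1) wNl vl) zv wv mulr0 addr0.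
rewrite (ipD1 dl vl vl) (ip_self vl) in E2.
have E3 : nrm2 v = - complex.Re (ip d v).
  have h := congr1 (@complex.Re RR) E2; rewrite ReD Re_rc Re0 in h; lra.
have h2 : (0 : RR) < 2 by lra.
have [b1 _] := @ip_bound_k _ d v 2 dl vl h2.
have k4 : (2 : RR) ^+ 2 = 4 by rewrite expr2; ring.
rewrite k4 in b1.
have hv0 := nrm2_ge0 vl; have hd0 := nrm2_ge0 dl.
have nv : nrm2 v <= 16 / 7 * nrm2 d.
  move: b1; rewrite ler_norml => /andP [b1 b2]; lra.
have := nrm2D_le dl vl; rewrite -E1; lra.
Qed.
End TMain.

Section Unitary.
Variables I J K : countType.
Variable U : (I -> CC) -> (J -> CC).
Hypothesis hU : unitary U.

Lemma U_l2 x : l2 x -> l2 (U x). Proof. by case: hU => h _ _ _ _; apply: h. Qed.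
Lemma U_add x y : l2 x -> l2 y -> U (vadd x y) = vadd (U x) (U y). Proof. by case: hU => _ h _ _ _; apply: h. Qed.
Lemma U_scale c x : l2 x -> U (vscale c x) = vscale c (U x). Proof. by case: hU => _ _ h _ _; apply: h. Qed.
Lemma U_nrm2 x : l2 x -> nrm2 (U x) = nrm2 x. Proof. by case: hU => _ _ _ h _; apply: h. Qed.
Lemma U_surj y : l2 y -> exists2 x, l2 x & U x = y. Proof. by case: hU => _ _ _ _ h; apply: h. Qed.

Lemma U_sub x y : l2 x -> l2 y -> U (vsub x y) = vsub (U x) (U y).
Proof.
move=> hx hy.
have E : forall (T : countType) (a b : T -> CC), vsub a b = vadd a (vscale (-1) b).
  by move=> T a b; apply: funext => i; rewrite /vsub /vadd /vscale mulN1r.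
by rewrite !E (U_add hx (l2_scale (-1) hy)) (U_scale (-1) hy).
Qed.

Lemma U_inj x y : l2 x -> l2 y -> U x = U y -> x = y.
Proof.
move=> hx hy hxy.
have h0 : nrm2 (vsub x y) <= 0.
  rewrite -(U_nrm2 (l2_sub hx hy)) (U_sub hx hy) hxy.
  have -> : vsub (U y) (U y) = @vzero J by apply: funext => i; rewrite /vsub subrr.
  by rewrite nrm2_zero.
have h := nrm2_eq0 (l2_sub hx hy) h0.
apply: funext => i; have := congr1 (fun f => f i) h; rewrite /vsub /vzero /= => /eqP.
by rewrite subr_eq0 => /eqP.
Qed.

Lemma U_ip x y : l2 x -> l2 y -> ip (U x) (U y) = ip x y.
Proof.
move=> hx hy; have hUx := U_l2 hx; have hUy := U_l2 hy.
apply: cext.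
  rewrite !ip_Re -U_add // -U_sub // !U_nrm2 //; [exact: l2_sub | exact: l2_add].
have hiy := l2_scale 'i hy.
rewrite !ip_Im -(U_scale 'i hy) -(U_add hx hiy) -(U_sub hx hiy) !U_nrm2 //.
  exact: l2_sub.
exact: l2_add.
Qed.

Lemma l2_slice_l (W : (I * K) -> CC) k : l2 W -> l2 (fun a => W (a, k)).
Proof.
move=> hW; apply: (@l2_bound _ _ (nrm2 W)) => s us.
have -> : psum s (fun a => W (a, k)) = psum [seq (a, k) | a <- s] W by rewrite /psum big_map.
by apply: psum_le_nrm2 => //; rewrite map_inj_uniq // => a b [->].
Qed.

Lemma l2_slice_r (W : (K * I) -> CC) k : l2 W -> l2 (fun a => W (k, a)).
Proof.
move=> hW; apply: (@l2_bound _ _ (nrm2 W)) => s us.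
have -> : psum s (fun a => W (k, a)) = psum [seq (k, a) | a <- s] W by rewrite /psum big_map.
by apply: psum_le_nrm2 => //; rewrite map_inj_uniq // => a b [->].
Qed.

Lemma ampl_l_tv (g : I -> CC) (y : K -> CC) : l2 g -> ampl_l U (tv g y) = tv (U g) y.
Proof.
move=> hg; apply: funext => p; rewrite /ampl_l /tv.
have -> : (fun a => g (a, p.2).1 * y (a, p.2).2) = vscale (y p.2) g.
  by apply: funext => a; rewrite /vscale /= mulrC.
by rewrite U_scale // /vscale mulrC.
Qed.

Lemma ampl_r_tv (a : K -> CC) (g : I -> CC) : l2 g -> ampl_r U (tv a g) = tv a (U g).
Proof.
move=> hg; apply: funext => p; rewrite /ampl_r /tv.
have -> : (fun b => a (p.1, b).1 * g (p.1, b).2) = vscale (a p.1) g by [].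
by rewrite U_scale.
Qed.

Lemma ampl_l_inj (W1 W2 : (I * K) -> CC) : l2 W1 -> l2 W2 -> ampl_l U W1 = ampl_l U W2 -> W1 = W2.
Proof.
move=> h1 h2 h; apply: funext => -[i k].
have : U (fun a => W1 (a, k)) = U (fun a => W2 (a, k)).
  by apply: funext => j; have := congr1 (fun f => f (j, k)) h; rewrite /ampl_l.
move/(U_inj (l2_slice_l k h1) (l2_slice_l k h2)) => e.
by have := congr1 (fun f => f i) e.
Qed.

Lemma ampl_r_inj (W1 W2 : (K * I) -> CC) : l2 W1 -> l2 W2 -> ampl_r U W1 = ampl_r U W2 -> W1 = W2.
Proof.
move=> h1 h2 h; apply: funext => -[k i].
have : U (fun a => W1 (k, a)) = U (fun a => W2 (k, a)).
  by apply: funext => j; have := congr1 (fun f => f (k, j)) h; rewrite /ampl_r.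
move/(U_inj (l2_slice_r k h1) (l2_slice_r k h2)) => e.
by have := congr1 (fun f => f i) e.
Qed.
End Unitary.

Lemma reassoc_tv (I J K : countType) (a : I -> CC) (b : J -> CC) (c : K -> CC) :
  reassoc (tv (tv a b) c) = tv a (tv b c).
Proof. by apply: funext => p; rewrite /reassoc /tv /= mulrA. Qed.

Lemma reassoc_inj (I J K : countType) (f g : ((I * J) * K) -> CC) : reassoc f = reassoc g -> f = g.
Proof. by move=> h; apply: funext => -[[i j] k]; have := congr1 (fun F => F (i, (j, k))) h. Qed.

Section TvCspan.
Variables I J : countType.

Lemma tv_cspan_l (G : set (I -> CC)) g (y : J -> CC) : G `<=` l2 -> cspan G g -> l2 y ->
  cspan [set w | exists g', G g' /\ w = tv g' y] (tv g y).
Proof.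
move=> hG [hg ag] hy; split; first exact: l2_tv.
move=> e he; set Y := nrm2 y; have hY : 0 <= Y by apply: nrm2_ge0.
have hd : 0 < e / (Y + 1) by rewrite divr_gt0 // ltr_wpDl.
case: (ag _ hd) => g' hg' ng.
have hg'l := span_l2 hG hg'.
exists (tv g' y).
  pose T' := [set w | exists g', G g' /\ w = tv g' y].
  apply: (@span_ind I G (fun h => Defs.span T' (tv h y))) hg'.
  - have -> : tv (@vzero I) y = @vzero _ by apply: funext => p; rewrite /tv /vzero mul0r.
    exact: span0.
  - move=> a b ha hb; have -> : tv (vadd a b) y = vadd (tv a y) (tv b y).
      by apply: funext => p; rewrite /tv /vadd mulrDl.
    exact: span_add.
  - move=> c a ha; have -> : tv (vscale c a) y = vscale c (tv a y).
      by apply: funext => p; rewrite /tv /vscale mulrA.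
    exact: span_scale.
  - by move=> a ha; apply: span_gen; exists a.
have -> : vsub (tv g y) (tv g' y) = tv (vsub g g') y.
  by apply: funext => p; rewrite /tv /vsub mulrBl.
apply: le_lt_trans (nrm2_tv_le (l2_sub hg hg'l) hy) _.
have h0 := nrm2_ge0 (l2_sub hg hg'l).
move: ng; rewrite ltr_pdivlMr ?ltr_wpDl // => ng; rewrite -/Y; nra.
Qed.

Lemma tv_cspan_r (G : set (J -> CC)) g (y : I -> CC) : G `<=` l2 -> cspan G g -> l2 y ->
  cspan [set w | exists g', G g' /\ w = tv y g'] (tv y g).
Proof.
move=> hG [hg ag] hy; split; first exact: l2_tv.
move=> e he; set Y := nrm2 y; have hY : 0 <= Y by apply: nrm2_ge0.
have hd : 0 < e / (Y + 1) by rewrite divr_gt0 // ltr_wpDl.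
case: (ag _ hd) => g' hg' ng.
have hg'l := span_l2 hG hg'.
exists (tv y g').
  pose T' := [set w | exists g', G g' /\ w = tv y g'].
  apply: (@span_ind J G (fun h => Defs.span T' (tv y h))) hg'.
  - have -> : tv y (@vzero J) = @vzero _ by apply: funext => p; rewrite /tv /vzero mulr0.
    exact: span0.
  - move=> a b ha hb; have -> : tv y (vadd a b) = vadd (tv y a) (tv y b).
      by apply: funext => p; rewrite /tv /vadd mulrDr.
    exact: span_add.
  - move=> c a ha; have -> : tv y (vscale c a) = vscale c (tv y a).
      by apply: funext => p; rewrite /tv /vscale mulrCA.
    exact: span_scale.
  - by move=> a ha; apply: span_gen; exists a.
have -> : vsub (tv y g) (tv y g') = tv y (vsub g g').
  by apply: funext => p; rewrite /tv /vsub mulrBr.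
apply: le_lt_trans (nrm2_tv_le hy (l2_sub hg hg'l)) _.
have h0 := nrm2_ge0 (l2_sub hg hg'l).
move: ng; rewrite ltr_pdivlMr ?ltr_wpDl // => ng; rewrite -/Y; nra.
Qed.
End TvCspan.

Section Casts.
Variable Ind : RR -> countType.
Unset Implicit Arguments.
Variable B : forall s t : RR, (Ind (s + t) -> CC) -> ((Ind s * Ind t)%type -> CC).
Set Implicit Arguments.

Lemma castv_irr (u v : RR) (e e' : u = v) (x : Ind u -> CC) : @castv Ind u v e x = @castv Ind u v e' x.
Proof. by rewrite (eq_irrelevance e e'). Qed.

Lemma castv_comp (u v w : RR) (e1 : u = v) (e2 : v = w) (x : Ind u -> CC) :
  @castv Ind v w e2 (@castv Ind u v e1 x) = @castv Ind u w (etrans e1 e2) x.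
Proof. by move: e2; case: v / e1 => e2 /=; apply: castv_irr. Qed.

Lemma l2_castv (u v : RR) (e : u = v) (x : Ind u -> CC) : l2 x -> l2 (@castv Ind u v e x).
Proof. by case: v / e. Qed.

Lemma ocompl_castv (P : forall t, set (Ind t -> CC)) (u v : RR) (e : u = v) (b : Ind u -> CC) :
  ocompl (P u) b -> ocompl (P v) (@castv Ind u v e b).
Proof. by case: v / e. Qed.

Definition castl (t u v : RR) (e : u = v) (z : (Ind u * Ind t)%type -> CC) : (Ind v * Ind t)%type -> CC :=
  eq_rect u (fun w => (Ind w * Ind t)%type -> CC) z v e.
Definition castr (r u v : RR) (e : u = v) (z : (Ind r * Ind u)%type -> CC) : (Ind r * Ind v)%type -> CC :=
  eq_rect u (fun w => (Ind r * Ind w)%type -> CC) z v e.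

Lemma B_castl (t u v : RR) (e : u = v) (x : Ind (u + t) -> CC) :
  B v t (@castv Ind _ _ (congr1 (fun a => a + t) e) x) = castl e (B u t x).
Proof. by case: v / e. Qed.

Lemma castl_tv (t u v : RR) (e : u = v) (a : Ind u -> CC) (b : Ind t -> CC) : castl e (tv a b) = tv (@castv Ind u v e a) b.
Proof. by case: v / e. Qed.

Lemma B_castr (r u v : RR) (e : u = v) (x : Ind (r + u) -> CC) :
  B r v (@castv Ind _ _ (congr1 (fun a => r + a) e) x) = castr e (B r u x).
Proof. by case: v / e. Qed.

Lemma castr_tv (r u v : RR) (e : u = v) (a : Ind r -> CC) b : castr e (tv a b) = tv a (@castv Ind u v e b).
Proof. by case: v / e. Qed.

Lemma castv3 (u1 u2 u3 u4 : RR) (e1 : u1 = u2) (e2 : u2 = u3) (e3 : u3 = u4) (e : u1 = u4) (x : Ind u1 -> CC) :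
  @castv Ind _ _ e3 (@castv Ind _ _ e2 (@castv Ind _ _ e1 x)) = @castv Ind _ _ e x.
Proof. by rewrite !castv_comp; apply: castv_irr. Qed.

Lemma castv2 (u1 u2 u3 : RR) (e1 : u1 = u2) (e2 : u2 = u3) (e : u1 = u3) (x : Ind u1 -> CC) :
  @castv Ind _ _ e2 (@castv Ind _ _ e1 x) = @castv Ind _ _ e x.
Proof. by rewrite !castv_comp; apply: castv_irr. Qed.
End Casts.

Section Main.
Variable Ind : RR -> countType.
Unset Implicit Arguments.
Variable B : forall s t : RR, (Ind (s + t) -> CC) -> ((Ind s * Ind t)%type -> CC).
Variable F : forall t : RR, set (Ind t -> CC).
Set Implicit Arguments.
Hypothesis hU : forall s t : RR, 0 < s -> 0 < t -> unitary (B s t).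
Hypothesis hA : forall r s t : RR, 0 < r -> 0 < s -> 0 < t ->
     forall x : Ind (r + s + t) -> CC, l2 x ->
       reassoc (ampl_l (B r s) (B (r + s) t x)) =
       ampl_r (B s t) (B r (s + t) (castv (esym (addrA r s t)) x)).
Hypothesis hF : forall t : RR, 0 < t -> closed_subspace (F t).
Hypothesis hFB : forall s t : RR, 0 < s -> 0 < t ->
     forall x, F (s + t) x -> tsub (F s) (F t) (B s t x).

Unset Implicit Arguments.
Definition Gen (u : RR) : set (Ind u -> CC) :=
  [set z | l2 z /\ exists r : RR, [/\ 0 < r, r < u &
           exists x y, [/\ ocompl (F r) x, ocompl (F (u - r)) y &
              B r (u - r) (castv (split_time r u) z) = tv x y]]].

Set Implicit Arguments.
Lemma Genl (u : RR) : Gen u `<=` l2. Proof. by move=> z []. Qed.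

Lemma Ftilde_Gen (u : RR) : Ftilde B F u = cspan (Gen u). Proof. by []. Qed.

Lemma Fl (u : RR) : 0 < u -> F u `<=` l2. Proof. by move=> hu; case: (hF hu). Qed.

Lemma ocompl_pre_l (s t : RR) (hs : 0 < s) (ht : 0 < t) (b : Ind s -> CC) (y : Ind t -> CC)
  (w : Ind (s + t) -> CC) : ocompl (F s) b -> l2 y -> l2 w -> B s t w = tv b y -> ocompl (F (s + t)) w.
Proof.
move=> [hbl hb0] hy hw hBw; split => // f hf.
have fl : l2 f by apply: (Fl (addr_gt0 hs ht)).
rewrite -(U_ip (hU hs ht) hw fl) hBw.
have gl : [set z | exists x y, F s x /\ F t y /\ z = tv x y] `<=` l2.
  by move=> z [p [q [hp [hq ->]]]]; apply: l2_tv; [exact: (Fl hs hp) | exact: (Fl ht hq)].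
apply: (ortho_cspan (l2_tv hbl hy) gl _ (hFB hs ht hf)) => z [p [q [hp [hq ->]]]].
apply: ip_tv0l => //; [exact: (Fl hs hp) | exact: (Fl ht hq) | exact: (hb0 _ hp)].
Qed.

Lemma ocompl_pre_r (s t : RR) (hs : 0 < s) (ht : 0 < t) (y : Ind s -> CC) (a : Ind t -> CC)
  (w : Ind (s + t) -> CC) : ocompl (F t) a -> l2 y -> l2 w -> B s t w = tv y a -> ocompl (F (s + t)) w.
Proof.
move=> [hal ha0] hy hw hBw; split => // f hf.
have fl : l2 f by apply: (Fl (addr_gt0 hs ht)).
rewrite -(U_ip (hU hs ht) hw fl) hBw.
have gl : [set z | exists x y, F s x /\ F t y /\ z = tv x y] `<=` l2.
  by move=> z [p [q [hp [hq ->]]]]; apply: l2_tv; [exact: (Fl hs hp) | exact: (Fl ht hq)].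
apply: (ortho_cspan (l2_tv hy hal) gl _ (hFB hs ht hf)) => z [p [q [hp [hq ->]]]].
apply: ip_tv0r => //; [exact: (Fl hs hp) | exact: (Fl ht hq) | exact: (ha0 _ hq)].
Qed.

Lemma L1 (s t : RR) (hs : 0 < s) (ht : 0 < t) (x : Ind (s + t) -> CC) :
  ocompl (Ftilde B F (s + t)) x ->
  forall g y, Gen s g -> l2 y -> ip (B s t x) (tv g y) = 0.
Proof.
move=> hx g y [hg [r [hr0 hrs [a [b [ha hb hab]]]]]] hy.
have hsr : 0 < s - r by rewrite subr_gt0.
have hU1 := hU hs ht.
case: (U_surj hU1 (l2_tv hg hy)) => w hw hBw.
case: hx => hxl hx0.
rewrite -hBw (U_ip hU1 hxl hw); apply: hx0.
apply: span_cspan; first exact: Genl.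
apply: span_gen; split => //; exists r; split => //.
  by have : r < s + t by lra.
exists a.
have hsrt := hU hr0 (addr_gt0 hsr ht).
have hsr_t := hU hsr ht.
have hrsr := hU hr0 hsr.
have hal : l2 a by case: ha.
have hbl : l2 b by case: hb.
case: (U_surj hsr_t (l2_tv hbl hy)) => b2 hb2 hBb2.
pose es := split_time r s.
pose X := @castv Ind _ _ (congr1 (fun u => u + t) es) w.
have hX : l2 X by apply: l2_castv.
have hAs := hA hr0 hsr ht hX.
rewrite /X B_castl hBw castl_tv (ampl_l_tv hrsr y (l2_castv es hg)) hab reassoc_tv in hAs.
pose Y := @castv Ind _ _ (esym (addrA r (s - r) t)) X.
have hY : l2 Y by apply: l2_castv.
have hW : B r (s - r + t) Y = tv a b2.
  apply: (ampl_r_inj hsr_t (U_l2 hsrt hY) (l2_tv hal hb2)).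
  by rewrite (ampl_r_tv hsr_t a hb2) hBb2 -hAs.
have e2 : s - r + t = s + t - r by ring.
exists (@castv Ind _ _ e2 b2); split => //.
  apply: ocompl_castv; apply: (ocompl_pre_l hsr ht hb hy hb2 hBb2).
rewrite -castr_tv -hW -B_castr; congr (B r (s + t - r)).
by rewrite /Y /X; symmetry; apply: castv3.
Qed.

Lemma R1 (s t : RR) (hs : 0 < s) (ht : 0 < t) (x : Ind (s + t) -> CC) :
  ocompl (Ftilde B F (s + t)) x ->
  forall g y, Gen t g -> l2 y -> ip (B s t x) (tv y g) = 0.
Proof.
move=> hx g y [hg [r [hr0 hrt [a [b [ha hb hab]]]]]] hy.
have htr : 0 < t - r by rewrite subr_gt0.
have hU1 := hU hs ht.
case: (U_surj hU1 (l2_tv hy hg)) => w hw hBw.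
case: hx => hxl hx0.
rewrite -hBw (U_ip hU1 hxl hw); apply: hx0.
apply: span_cspan; first exact: Genl.
have hsr0 : 0 < s + r by apply: addr_gt0.
apply: span_gen; split => //; exists (s + r); split => //.
  by have : s + r < s + t by lra.
have hsr := hU hs hr0.
have hsr_tr := hU hsr0 htr.
have hrtr := hU hr0 htr.
have hal : l2 a by case: ha.
have hbl : l2 b by case: hb.
case: (U_surj hsr (l2_tv hy hal)) => a2 ha2 hBa2.
exists a2.
have e0 : s + t = s + r + (t - r) by ring.
pose X := @castv Ind _ _ e0 w.
have hX : l2 X by apply: l2_castv.
have hAs := hA hs hr0 htr hX.
pose et := split_time r t.
have eX : @castv Ind _ _ (esym (addrA s r (t - r))) X = @castv Ind _ _ (congr1 (fun u => s + u) et) w.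
  by rewrite /X; apply: castv2.
rewrite eX B_castr hBw castr_tv (ampl_r_tv hrtr y (l2_castv et hg)) hab in hAs.
have hW : B (s + r) (t - r) X = tv a2 b.
  apply: (ampl_l_inj hsr (U_l2 hsr_tr hX) (l2_tv ha2 hbl)).
  apply: reassoc_inj; rewrite hAs (ampl_l_tv hsr b ha2) hBa2 reassoc_tv //.
have e3 : t - r = s + t - (s + r) by ring.
exists (@castv Ind _ _ e3 b); split.
- exact: (ocompl_pre_r hs hr0 ha hy ha2 hBa2).
- exact: ocompl_castv.
rewrite -castr_tv -hW -B_castr; congr (B (s + r) (s + t - (s + r))).
by rewrite /X; symmetry; apply: castv2.
Qed.
End Main.

Unset Implicit Arguments.
Set Strict Implicit.
Theorem mainTheorem12 (Ind : RR -> countType)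
  (B : forall s t : RR, (Ind (s + t) -> CC) -> ((Ind s * Ind t)%type -> CC))
  (F : forall t : RR, set (Ind t -> CC)) :
  product_system B -> inclusion_subsystem B F ->
  forall s t : RR, 0 < s -> 0 < t ->
    forall x, Fprime B F (s + t) x ->
      tsub (Fprime B F s) (Fprime B F t) (B s t x).
Proof.
move=> [hU hA] [hF hFB] s t hs ht x hx.
have hxl : l2 x by case: hx.
rewrite /Fprime.
apply: tensor_main.
- exact: (cspan_closed (@Genl Ind B F s)).
- exact: (cspan_closed (@Genl Ind B F t)).
- exact: (U_l2 (hU s t hs ht) hxl).
- move=> g y hg hy.
  have Tl : [set w | exists g', Gen Ind B F s g' /\ w = tv g' y] `<=` l2.
    by move=> w [g' [hg' ->]]; apply: l2_tv => //; apply: (@Genl Ind B F s).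
  apply: (ortho_cspan (U_l2 (hU s t hs ht) hxl) Tl _ (tv_cspan_l (@Genl Ind B F s) hg hy)).
  by move=> w [g' [hg' ->]]; apply: (L1 hU hA hF hFB hs ht hx hg' hy).
- move=> h y hh hy.
  have Tl : [set w | exists g', Gen Ind B F t g' /\ w = tv y g'] `<=` l2.
    by move=> w [g' [hg' ->]]; apply: l2_tv => //; apply: (@Genl Ind B F t).
  apply: (ortho_cspan (U_l2 (hU s t hs ht) hxl) Tl _ (tv_cspan_r (@Genl Ind B F t) hh hy)).
  by move=> w [g' [hg' ->]]; apply: (R1 hU hA hF hFB hs ht hx hg' hy).
Qed.
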